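(* Let $F\in\mathcal{P}$ with $K=\sup_{z\in\mathbb{D}}|\arg F(z)|<\frac{\pi}{2}$, and write $K=\arcsin\frac{2R}{1+R^2}$ with $0\le R<1$. If $\varphi$ is a Schwarz-type function with $\|\varphi\|_\infty\le\frac{1-R}{1+R}$, then $T_{F,\varphi}(f)\in\mathcal{P}$ for every $f\in\mathcal{P}$.
   Context: $\mathbb{D}$ is the open unit disk. $\mathcal{P}$ is the set of analytic $f$ on $\mathbb{D}$ with $\mathrm{Re}\,f>0$ and $f(0)=1$. A Schwarz-type function is an analytic $\varphi:\mathbb{D}\to\mathbb{D}$ with $\varphi(0)=0$. $\|\varphi\|_\infty=\sup_{z\in\mathbb{D}}|\varphi(z)|$. $\arg$ is the principal branch with values in $(-\pi,\pi]$. $T_{F,\varphi}(f)=F\cdot(f\circ\varphi)$. *)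

(* Defs.v *)
From Stdlib Require Import Reals.
From Coquelicot Require Import Coquelicot.
Open Scope R_scope.

Definition inD (z : C) : Prop := Cmod z < 1.

Definition analytic_on_D (f : C -> C) : Prop :=
  forall z : C, inD z -> ex_derive (K := C_AbsRing) (V := C_NormedModule) f z.

Definition classP (f : C -> C) : Prop :=
  analytic_on_D f /\ (forall z, inD z -> 0 < Re (f z)) /\ f (RtoC 0) = RtoC 1.

Definition schwarz_type (phi : C -> C) : Prop :=
  analytic_on_D phi /\ (forall z, inD z -> inD (phi z)) /\ phi (RtoC 0) = RtoC 0.

(* Principal argument, values in (-PI, PI]; convention Carg 0 = 0. *)
Definition Carg (z : C) : R :=
  let x := fst z in let y := snd z in
  if Rlt_dec 0 x then atan (y / x)
  else if Rlt_dec x 0 then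
    (if Rle_dec 0 y then atan (y / x) + PI else atan (y / x) - PI)
  else if Rlt_dec 0 y then PI / 2
  else if Rlt_dec y 0 then - (PI / 2)
  else 0.

Definition T_op (F phi f : C -> C) : C -> C := fun z => Cmult (F z) (f (phi z)).

(* Main.v *)
Require Import Defs.
From Stdlib Require Import Reals Lra Lia Psatz ZArith.
From Coquelicot Require Import Coquelicot.
Open Scope R_scope.

Definition holo (g : C -> C) (z : C) : Prop :=
  ex_derive (K := C_AbsRing) (V := C_NormedModule) g z.

Definition Cdiff (g : C -> C) (z l : C) : Prop :=
  forall eps, 0 < eps -> exists del, 0 < del /\ forall w, Cmod (w - z)%C < del ->
    Cmod (g w - g z - (w - z) * l)%C <= eps * Cmod (w - z)%C.

Definition Ccont (g : C -> C) (z : C) : Prop :=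
  forall eps, 0 < eps -> exists del, 0 < del /\ forall w, Cmod (w - z)%C < del ->
    Cmod (g w - g z)%C < eps.

Lemma B1 (g : C -> C) z l : is_derive (K:=C_AbsRing) (V:=C_NormedModule) g z l -> Cdiff g z l.
Proof.
  intros [_ H] eps Heps.
  assert (Hz : is_filter_lim (locally z) z) by (intros P HP; exact HP).
  specialize (H z Hz (mkposreal eps Heps)).
  destruct H as [del Hdel].
  exists del. split. apply cond_pos.
  intros w Hw. apply (Hdel w). exact Hw.
Qed.

Lemma B2 (g : C -> C) z l : Cdiff g z l -> is_derive (K:=C_AbsRing) (V:=C_NormedModule) g z l.
Proof.
  intros H. split. apply is_linear_scal_l.
  intros x Hx. apply (is_filter_lim_locally_unique (K:=C_AbsRing) (V:=AbsRing_NormedModule C_AbsRing)) in Hx. subst x.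
  intros eps. destruct (H eps (cond_pos eps)) as [del [Hd Hw]].
  exists (mkposreal _ Hd). intros y Hy. apply Hw. exact Hy.
Qed.

Lemma B1' (g : C -> C) z l : is_derive (K:=C_AbsRing) (V:=AbsRing_NormedModule C_AbsRing) g z l -> Cdiff g z l.
Proof.
  intros [_ H] eps Heps.
  assert (Hz : is_filter_lim (locally z) z) by (intros P HP; exact HP).
  specialize (H z Hz (mkposreal eps Heps)).
  destruct H as [del Hdel].
  exists del. split. apply cond_pos.
  intros w Hw. apply (Hdel w). exact Hw.
Qed.

Lemma B2' (g : C -> C) z l : Cdiff g z l -> is_derive (K:=C_AbsRing) (V:=AbsRing_NormedModule C_AbsRing) g z l.
Proof.
  intros H. split. apply is_linear_scal_l.
  intros x Hx. apply (is_filter_lim_locally_unique (K:=C_AbsRing) (V:=AbsRing_NormedModule C_AbsRing)) in Hx. subst x.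
  intros eps. destruct (H eps (cond_pos eps)) as [del [Hd Hw]].
  exists (mkposreal _ Hd). intros y Hy. apply Hw. exact Hy.
Qed.

Lemma holo_Cdiff g z : holo g z -> exists l, Cdiff g z l.
Proof. intros [l Hl]. exists l. now apply B1. Qed.

Lemma Cdiff_holo g z l : Cdiff g z l -> holo g z.
Proof. intros H. exists l. now apply B2. Qed.

Lemma Cdiff_cont g z l : Cdiff g z l -> Ccont g z.
Proof.
  intros H eps Heps.
  destruct (H 1 Rlt_0_1) as [d [Hd Hw]].
  exists (Rmin d (eps / (2 + Cmod l))). split.
  { apply Rmin_pos; auto. apply Rdiv_lt_0_compat; auto. pose proof (Cmod_ge_0 l); lra. }
  intros w Hwz.
  assert (H1 : Cmod (w - z)%C < d) by (eapply Rlt_le_trans; [exact Hwz| apply Rmin_l]).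
  assert (H2 : Cmod (w - z)%C < eps / (2 + Cmod l)) by (eapply Rlt_le_trans; [exact Hwz| apply Rmin_r]).
  specialize (Hw w H1).
  replace (g w - g z)%C with ((g w - g z - (w - z) * l) + (w - z) * l)%C by ring.
  eapply Rle_lt_trans. apply Cmod_triangle. rewrite Cmod_mult.
  pose proof (Cmod_ge_0 l). pose proof (Cmod_ge_0 (w - z)%C).
  apply Rmult_lt_compat_r with (r := 2 + Cmod l) in H2; [|lra].
  unfold Rdiv in H2. rewrite Rmult_assoc, Rinv_l in H2 by lra. nra.
Qed.

Lemma holo_cont g z : holo g z -> Ccont g z.
Proof. intros H. destruct (holo_Cdiff g z H) as [l Hl]. eapply Cdiff_cont; eauto. Qed.

Lemma holo_plus f g z : holo f z -> holo g z -> holo (fun w => f w + g w)%C z.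
Proof.
  intros [lf Hf] [lg Hg]. exists (plus lf lg).
  apply (is_derive_plus (K:=C_AbsRing) (V:=C_NormedModule) f g z lf lg Hf Hg).
Qed.

Lemma holo_mult f g z : holo f z -> holo g z -> holo (fun w => f w * g w)%C z.
Proof.
  intros [lf Hf] [lg Hg]. apply B1 in Hf. apply B1 in Hg. apply B2' in Hf. apply B2' in Hg.
  eapply Cdiff_holo. apply B1'.
  apply (is_derive_mult (K:=C_AbsRing) f g z lf lg Hf Hg).
  intros; apply Cmult_comm.
Qed.

Lemma holo_const (c : C) z : holo (fun _ => c) z.
Proof. exists zero. apply (is_derive_const (K:=C_AbsRing) (V:=C_NormedModule)). Qed.

Lemma holo_id z : holo (fun w => w) z.
Proof.
  apply (Cdiff_holo _ _ 1%C). intros eps Heps. exists 1. split; [lra|].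
  intros w _. cbv beta. replace (w - z - (w - z) * 1)%C with (RtoC 0) by ring. rewrite Cmod_0.
  pose proof (Cmod_ge_0 (w - z)%C). nra.
Qed.

Lemma holo_comp f g z : holo g z -> holo f (g z) -> holo (fun w => f (g w)) z.
Proof.
  intros [lg Hg] [lf Hf]. apply B1 in Hg. apply B2' in Hg. eexists.
  apply (is_derive_comp (K:=C_AbsRing) (V:=C_NormedModule) f g z lf lg Hf Hg).
Qed.

Lemma holo_ext_loc f g z : (exists d, 0 < d /\ forall w, Cmod (w - z)%C < d -> f w = g w) ->
  holo f z -> holo g z.
Proof.
  intros [d [Hd Hfg]] [l Hl]. exists l.
  apply (is_derive_ext_loc (K:=C_AbsRing) (V:=C_NormedModule) f g z l); auto.
  exists (mkposreal d Hd). intros y Hy. apply Hfg. exact Hy.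
Qed.

Lemma holo_opp f z : holo f z -> holo (fun w => - f w)%C z.
Proof.
  intros H.
  eapply holo_ext_loc; [| apply (holo_mult (fun _ => (-1)%C) f z (holo_const _ z) H)].
  exists 1; split; [lra|]. intros; simpl; ring.
Qed.

Lemma holo_minus f g z : holo f z -> holo g z -> holo (fun w => f w - g w)%C z.
Proof. intros Hf Hg. apply (holo_plus f (fun w => - g w)%C z Hf (holo_opp g z Hg)). Qed.

Lemma holo_pow f n z : holo f z -> holo (fun w => Cpow (f w) n) z.
Proof.
  intros H. induction n; simpl.
  - apply holo_const.
  - apply (holo_mult f (fun w => Cpow (f w) n) z H IHn).
Qed.

Lemma Cinv_Cdiff (u : C) : u <> 0%C -> Cdiff Cinv u (- / (u * u))%C.
Proof.
  intros Hu eps Heps.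
  assert (Hm : 0 < Cmod u) by (apply (proj1 (Cmod_gt_0 u)); exact Hu).
  exists (Rmin (Cmod u / 2) (eps * (Cmod u)^3 / 2)). split.
  { assert (0 < Cmod u ^ 3) by (apply pow_lt; auto).
    apply Rmin_pos; [lra|]. apply Rdiv_lt_0_compat; [|lra]. apply Rmult_lt_0_compat; auto. }
  intros w Hw.
  assert (H1 : Cmod (w - u)%C < Cmod u / 2) by (eapply Rlt_le_trans; [exact Hw| apply Rmin_l]).
  assert (H2 : Cmod (w - u)%C < eps * (Cmod u)^3 / 2) by (eapply Rlt_le_trans; [exact Hw| apply Rmin_r]).
  assert (Hwm : Cmod u / 2 < Cmod w).
  { pose proof (Cmod_triangle (w - u)%C w). replace (w - u - w)%C with (- u)%C in * by ring.
    pose proof (Cmod_triangle w (u - w)%C). replace (w + (u - w))%C with u in H0 by ring.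
    replace (u - w)%C with (- (w - u))%C in H0 by ring. rewrite Cmod_opp in H0. lra. }
  assert (Hw0 : w <> 0%C). { intro E; subst. rewrite Cmod_0 in Hwm. lra. }
  replace (/ w - / u - (w - u) * - / (u * u))%C with ((w - u) * (w - u) * / (u * u * w))%C
    by (field; split; auto).
  rewrite !Cmod_mult, Cmod_inv, !Cmod_mult.
  2: { repeat apply Cmult_neq_0; auto. }
  set (x := Cmod (w - u)%C) in *. set (m := Cmod u) in *. set (c := Cmod w) in *.
  assert (0 <= x) by apply Cmod_ge_0.
  assert (Hc : 0 < m * m * c) by (apply Rmult_lt_0_compat; [apply Rmult_lt_0_compat|]; lra).
  rewrite Rmult_assoc. rewrite (Rmult_comm eps).
  apply Rmult_le_compat_l; auto.
  apply (Rmult_le_reg_r (m * m * c)); auto.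
  rewrite Rmult_assoc, Rinv_l by lra. rewrite Rmult_1_r.
  assert (m ^ 3 <= 2 * (m * m * c)) by (simpl; nra).
  nra.
Qed.

Lemma holo_inv f z : holo f z -> f z <> 0%C -> holo (fun w => / f w)%C z.
Proof.
  intros Hf Hz. apply (holo_comp Cinv f z Hf).
  eapply Cdiff_holo. apply Cinv_Cdiff; auto.
Qed.

Lemma holo_div f g z : holo f z -> holo g z -> g z <> 0%C -> holo (fun w => f w / g w)%C z.
Proof. intros. apply (holo_mult f (fun w => / g w)%C z); auto. apply holo_inv; auto. Qed.

Lemma Ccont_plus f g z : Ccont f z -> Ccont g z -> Ccont (fun w => f w + g w)%C z.
Proof.
  intros Hf Hg eps Heps.
  destruct (Hf (eps/2)) as [d1 [Hd1 H1]]; [lra|].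
  destruct (Hg (eps/2)) as [d2 [Hd2 H2]]; [lra|].
  exists (Rmin d1 d2). split; [apply Rmin_pos; auto|].
  intros w Hw.
  specialize (H1 w (Rlt_le_trans _ _ _ Hw (Rmin_l _ _))).
  specialize (H2 w (Rlt_le_trans _ _ _ Hw (Rmin_r _ _))).
  replace (f w + g w - (f z + g z))%C with ((f w - f z) + (g w - g z))%C by ring.
  eapply Rle_lt_trans. apply Cmod_triangle. lra.
Qed.

Lemma Ccont_mult f g z : Ccont f z -> Ccont g z -> Ccont (fun w => f w * g w)%C z.
Proof.
  intros Hf Hg eps Heps.
  set (A := Cmod (f z)). set (B := Cmod (g z)).
  assert (HA : 0 <= A) by apply Cmod_ge_0. assert (HB : 0 <= B) by apply Cmod_ge_0.
  set (e := Rmin 1 (eps / (A + B + 1))).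
  assert (He : 0 < e) by (apply Rmin_pos; [lra| apply Rdiv_lt_0_compat; lra]).
  assert (He1 : e <= 1) by apply Rmin_l.
  assert (He2 : e * (A + B + 1) <= eps).
  { unfold e. apply Rle_trans with (eps / (A + B + 1) * (A + B + 1)).
    apply Rmult_le_compat_r; [lra| apply Rmin_r]. right; field; lra. }
  destruct (Hf e He) as [d1 [Hd1 H1]].
  destruct (Hg e He) as [d2 [Hd2 H2]].
  exists (Rmin d1 d2). split; [apply Rmin_pos; auto|].
  intros w Hw.
  specialize (H1 w (Rlt_le_trans _ _ _ Hw (Rmin_l _ _))).
  specialize (H2 w (Rlt_le_trans _ _ _ Hw (Rmin_r _ _))).
  replace (f w * g w - f z * g z)%C with ((f w - f z) * (g w - g z) + (f w - f z) * g z + f z * (g w - g z))%C by ring.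
  eapply Rle_lt_trans. apply Cmod_triangle.
  eapply Rle_lt_trans. apply Rplus_le_compat_r. apply Cmod_triangle.
  rewrite !Cmod_mult. fold A B.
  pose proof (Cmod_ge_0 (f w - f z)%C). pose proof (Cmod_ge_0 (g w - g z)%C).
  assert (Cmod (f w - f z)%C * Cmod (g w - g z)%C <= e * e) by (apply Rmult_le_compat; lra).
  assert (Cmod (f w - f z)%C * B <= e * B) by (apply Rmult_le_compat_r; lra).
  assert (A * Cmod (g w - g z)%C <= A * e) by (apply Rmult_le_compat_l; lra).
  assert (Cmod (f w - f z)%C * B + A * Cmod (g w - g z)%C < e * B + A * e + e * e \/
          Cmod (f w - f z)%C * Cmod (g w - g z)%C < e * e).
  { destruct (Req_dec e 0); [lra|]. left. nra. }
  nra.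
Qed.

Lemma Ccont_const c z : Ccont (fun _ => c) z.
Proof. intros eps Heps. exists 1. split; [lra|]. intros. replace (c - c)%C with (RtoC 0) by ring. rewrite Cmod_0; auto. Qed.

Lemma Ccont_pow f n z : Ccont f z -> Ccont (fun w => Cpow (f w) n) z.
Proof. intros H. induction n; simpl. apply Ccont_const. apply (Ccont_mult f _ z H IHn). Qed.

Lemma Ceq (x y : C) : Re x = Re y -> Im x = Im y -> x = y.
Proof. destruct x, y; simpl; intros; subst; auto. Qed.

Lemma Rcont_intro (f : R -> R) x :
  (forall eps, 0 < eps -> exists d, 0 < d /\ forall y, Rabs (y - x) < d -> Rabs (f y - f x) < eps) ->
  continuous f x.
Proof.
  intros H. apply continuity_pt_filterlim. intros eps Heps.
  destruct (H eps Heps) as [d [Hd Hy]]. exists d. split; auto.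
  intros y [_ Hyx]. apply Hy. exact Hyx.
Qed.

Lemma Re_le_Cmod (z : C) : Rabs (Re z) <= Cmod z.
Proof. apply re_le_Cmod. Qed.

Lemma Im_le_Cmod (z : C) : Rabs (Im z) <= Cmod z.
Proof.
  destruct z as [x y]. unfold Cmod; simpl. rewrite <- sqrt_Rsqr_abs. apply sqrt_le_1_alt.
  unfold Rsqr. nra.
Qed.

Definition seg (a b : C) (t : R) : C := (a + RtoC t * (b - a))%C.
Definition Ipath (g : C -> C) (a b : C) (t : R) : C := (g (seg a b t) * (b - a))%C.
Definition cint (g : C -> C) (a b : C) : C :=
  (RInt (fun t => Re (Ipath g a b t)) 0 1, RInt (fun t => Im (Ipath g a b t)) 0 1).

Definition Scont (g : C -> C) (a b : C) : Prop := forall t, 0 <= t <= 1 -> Ccont g (seg a b t).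

Lemma Cmod_seg_diff a b t s : Cmod (seg a b t - seg a b s)%C = Rabs (t - s) * Cmod (b - a)%C.
Proof.
  unfold seg. replace (a + RtoC t * (b - a) - (a + RtoC s * (b - a)))%C with (RtoC (t - s) * (b - a))%C.
  rewrite Cmod_mult, Cmod_R. auto.
  apply Ceq; simpl; ring.
Qed.

Lemma Ipath_cont g a b t : Ccont g (seg a b t) ->
  forall eps, 0 < eps -> exists d, 0 < d /\ forall s, Rabs (s - t) < d ->
    Cmod (Ipath g a b s - Ipath g a b t)%C < eps.
Proof.
  intros Hc eps Heps.
  set (K := Cmod (b - a)%C). assert (HK : 0 <= K) by apply Cmod_ge_0.
  destruct (Hc (eps / (K + 1))) as [d [Hd Hw]]. apply Rdiv_lt_0_compat; lra.
  exists (d / (K + 1)). split. apply Rdiv_lt_0_compat; lra.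
  intros s Hs. unfold Ipath.
  replace (g (seg a b s) * (b - a) - g (seg a b t) * (b - a))%C with ((g (seg a b s) - g (seg a b t)) * (b - a))%C by ring.
  rewrite Cmod_mult. fold K.
  assert (Hlt : Cmod (g (seg a b s) - g (seg a b t))%C < eps / (K + 1)).
  { apply Hw. rewrite Cmod_seg_diff. fold K.
    apply Rle_lt_trans with (Rabs (s - t) * (K + 1)). apply Rmult_le_compat_l. apply Rabs_pos. lra.
    apply Rmult_lt_reg_r with (/ (K + 1)). apply Rinv_0_lt_compat; lra.
    rewrite Rmult_assoc, Rinv_r by lra. rewrite Rmult_1_r. exact Hs. }
  pose proof (Cmod_ge_0 (g (seg a b s) - g (seg a b t))%C).
  apply Rle_lt_trans with (eps / (K + 1) * K). apply Rmult_le_compat_r; lra.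
  assert (E : eps / (K + 1) * (K + 1) = eps) by (field; lra).
  assert (0 < eps / (K + 1)) by (apply Rdiv_lt_0_compat; lra). nra.
Qed.

Lemma ex_Re g a b : Scont g a b -> forall u v, 0 <= u <= 1 -> 0 <= v <= 1 ->
  ex_RInt (fun t => Re (Ipath g a b t)) u v.
Proof.
  intros H u v Hu Hv. apply (ex_RInt_continuous (V:=R_CompleteNormedModule)). intros z Hz.
  assert (Hz' : 0 <= z <= 1).
  { split. apply Rle_trans with (Rmin u v); [apply Rmin_glb; lra| lra].
    apply Rle_trans with (Rmax u v); [lra| apply Rmax_lub; lra]. }
  apply Rcont_intro. intros eps Heps.
  destruct (Ipath_cont g a b z (H z Hz') eps Heps) as [d [Hd Hs]].
  exists d. split; auto. intros y Hy. eapply Rle_lt_trans; [| apply (Hs y Hy)].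
  replace (Re (Ipath g a b y) - Re (Ipath g a b z)) with (Re (Ipath g a b y - Ipath g a b z)%C) by (simpl; ring).
  apply Re_le_Cmod.
Qed.

Lemma ex_Im g a b : Scont g a b -> forall u v, 0 <= u <= 1 -> 0 <= v <= 1 ->
  ex_RInt (fun t => Im (Ipath g a b t)) u v.
Proof.
  intros H u v Hu Hv. apply (ex_RInt_continuous (V:=R_CompleteNormedModule)). intros z Hz.
  assert (Hz' : 0 <= z <= 1).
  { split. apply Rle_trans with (Rmin u v); [apply Rmin_glb; lra| lra].
    apply Rle_trans with (Rmax u v); [lra| apply Rmax_lub; lra]. }
  apply Rcont_intro. intros eps Heps.
  destruct (Ipath_cont g a b z (H z Hz') eps Heps) as [d [Hd Hs]].
  exists d. split; auto. intros y Hy. eapply Rle_lt_trans; [| apply (Hs y Hy)].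
  replace (Im (Ipath g a b y) - Im (Ipath g a b z)) with (Im (Ipath g a b y - Ipath g a b z)%C) by (simpl; ring).
  apply Im_le_Cmod.
Qed.

Lemma RInt_lin (f g : R -> R) (p q u v : R) : ex_RInt f u v -> ex_RInt g u v ->
  RInt (fun t => p * f t + q * g t) u v = p * RInt f u v + q * RInt g u v.
Proof.
  intros Hf Hg.
  apply is_RInt_unique.
  apply (is_RInt_plus (V:=R_NormedModule) (fun t => p * f t) (fun t => q * g t)).
  - apply (is_RInt_scal (V:=R_NormedModule) f u v p). apply (RInt_correct (V:=R_CompleteNormedModule)). exact Hf.
  - apply (is_RInt_scal (V:=R_NormedModule) g u v q). apply (RInt_correct (V:=R_CompleteNormedModule)). exact Hg.
Qed.

Lemma cint_ext g1 g2 a b : (forall t, 0 <= t <= 1 -> g1 (seg a b t) = g2 (seg a b t)) ->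
  cint g1 a b = cint g2 a b.
Proof.
  intros H. unfold cint. f_equal; apply RInt_ext; intros x Hx;
  rewrite Rmin_left in Hx by lra; rewrite Rmax_right in Hx by lra;
  unfold Ipath; rewrite H; auto; lra.
Qed.

Lemma Scont_plus f g a b : Scont f a b -> Scont g a b -> Scont (fun z => f z + g z)%C a b.
Proof. intros Hf Hg t Ht. apply Ccont_plus; auto. Qed.

Lemma Scont_mult f g a b : Scont f a b -> Scont g a b -> Scont (fun z => f z * g z)%C a b.
Proof. intros Hf Hg t Ht. apply Ccont_mult; auto. Qed.

Lemma Scont_const (c : C) a b : Scont (fun _ => c) a b.
Proof. intros t Ht. apply Ccont_const. Qed.

Lemma Re_cint g a b : Re (cint g a b) = RInt (fun t => Re (Ipath g a b t)) 0 1. Proof. reflexivity. Qed.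
Lemma Im_cint g a b : Im (cint g a b) = RInt (fun t => Im (Ipath g a b t)) 0 1. Proof. reflexivity. Qed.
Global Opaque cint.
Lemma Re_plus (x y : C) : Re (x + y)%C = Re x + Re y. Proof. reflexivity. Qed.
Lemma Im_plus (x y : C) : Im (x + y)%C = Im x + Im y. Proof. reflexivity. Qed.
Lemma Re_mult (x y : C) : Re (x * y)%C = Re x * Re y - Im x * Im y. Proof. reflexivity. Qed.
Lemma Im_mult (x y : C) : Im (x * y)%C = Re x * Im y + Im x * Re y. Proof. reflexivity. Qed.

Lemma cint_plus f g a b : Scont f a b -> Scont g a b ->
  cint (fun z => f z + g z)%C a b = (cint f a b + cint g a b)%C.
Proof.
  intros Hf Hg. apply Ceq; [rewrite (Re_plus (cint f a b)) | rewrite (Im_plus (cint f a b))];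
  rewrite ?(Re_cint (fun z => f z + g z)%C a b), ?(Im_cint (fun z => f z + g z)%C a b), ?(Re_cint f a b), ?(Im_cint f a b), ?(Re_cint g a b), ?(Im_cint g a b).
  - transitivity (1 * RInt (fun t => Re (Ipath f a b t)) 0 1 + 1 * RInt (fun t => Re (Ipath g a b t)) 0 1); [| ring].
    rewrite <- (RInt_lin _ _ 1 1) by (apply ex_Re; auto; lra).
    apply RInt_ext. intros. unfold Ipath. cbv beta. match goal with |- @eq _ ?x ?y => change (@eq R x y) end. repeat (rewrite Re_mult || rewrite Im_mult || rewrite Re_plus || rewrite Im_plus). ring.
  - transitivity (1 * RInt (fun t => Im (Ipath f a b t)) 0 1 + 1 * RInt (fun t => Im (Ipath g a b t)) 0 1); [| ring].
    rewrite <- (RInt_lin _ _ 1 1) by (apply ex_Im; auto; lra).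
    apply RInt_ext. intros. unfold Ipath. cbv beta. match goal with |- @eq _ ?x ?y => change (@eq R x y) end. repeat (rewrite Re_mult || rewrite Im_mult || rewrite Re_plus || rewrite Im_plus). ring.
Qed.

Lemma cint_scal (c : C) g a b : Scont g a b ->
  cint (fun z => c * g z)%C a b = (c * cint g a b)%C.
Proof.
  intros Hg. pose proof (ex_Re g a b Hg 0 1) as E1. pose proof (ex_Im g a b Hg 0 1) as E2.
  apply Ceq.
  - rewrite (Re_mult c (cint g a b)), (Re_cint (fun z => c * g z)%C a b), (Re_cint g a b), (Im_cint g a b).
    transitivity (Re c * RInt (fun t => Re (Ipath g a b t)) 0 1 + (- Im c) * RInt (fun t => Im (Ipath g a b t)) 0 1); [| ring].
    rewrite <- (RInt_lin (fun t => Re (Ipath g a b t)) (fun t => Im (Ipath g a b t)) (Re c) (- Im c)) by (first [apply E1 | apply E2]; lra).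
    apply RInt_ext. intros. unfold Ipath. cbv beta. match goal with |- @eq _ ?x ?y => change (@eq R x y) end. repeat (rewrite Re_mult || rewrite Im_mult). ring.
  - rewrite (Im_mult c (cint g a b)), (Im_cint (fun z => c * g z)%C a b), (Re_cint g a b), (Im_cint g a b).
    transitivity (Re c * RInt (fun t => Im (Ipath g a b t)) 0 1 + Im c * RInt (fun t => Re (Ipath g a b t)) 0 1); [| ring].
    rewrite <- (RInt_lin (fun t => Im (Ipath g a b t)) (fun t => Re (Ipath g a b t)) (Re c) (Im c)) by (first [apply E2 | apply E1]; lra).
    apply RInt_ext. intros. unfold Ipath. cbv beta. match goal with |- @eq _ ?x ?y => change (@eq R x y) end. repeat (rewrite Re_mult || rewrite Im_mult). ring.
Qed.

Lemma cint_bound g a b M : Scont g a b -> (forall t, 0 <= t <= 1 -> Cmod (g (seg a b t)) <= M) ->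
  Cmod (cint g a b) <= M * Cmod (b - a)%C.
Proof.
  intros Hg HM.
  pose proof (ex_Re g a b Hg 0 1 ltac:(lra) ltac:(lra)) as E1. pose proof (ex_Im g a b Hg 0 1 ltac:(lra) ltac:(lra)) as E2.
  set (J := cint g a b).
  assert (HM0 : 0 <= M) by (eapply Rle_trans; [apply Cmod_ge_0| apply (HM 0); lra]).
  destruct (Req_dec (Cmod J) 0) as [E|E].
  { rewrite E. apply Rmult_le_pos; auto. apply Cmod_ge_0. }
  assert (HJ : 0 < Cmod J) by (pose proof (Cmod_ge_0 J); lra).
  assert (Key : Cmod J * Cmod J <= Cmod J * (M * Cmod (b - a)%C)).
  { assert (EJ : Cmod J * Cmod J = RInt (fun t => Re J * Re (Ipath g a b t) + Im J * Im (Ipath g a b t)) 0 1).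
    { rewrite (RInt_lin (fun t => Re (Ipath g a b t)) (fun t => Im (Ipath g a b t)) (Re J) (Im J) 0 1 E1 E2).
      rewrite <- (Re_cint g a b), <- (Im_cint g a b). fold J.
      transitivity (Cmod J ^ 2); [simpl; ring|]. rewrite Cmod2_alt. ring. }
    rewrite EJ.
    apply Rle_trans with (RInt (fun _ => Cmod J * (M * Cmod (b - a)%C)) 0 1).
    - apply RInt_le. lra.
      + apply (ex_RInt_plus (V:=R_NormedModule)).
        apply (ex_RInt_scal (V:=R_NormedModule) _ _ _ _ E1).
        apply (ex_RInt_scal (V:=R_NormedModule) _ _ _ _ E2).
      + apply ex_RInt_const.
      + intros t Ht.
        assert (CS : Re J * Re (Ipath g a b t) + Im J * Im (Ipath g a b t) <= Cmod J * Cmod (Ipath g a b t)).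
        { set (X := Ipath g a b t).
          replace (Re J * Re X + Im J * Im X) with (Re (Cconj J * X)%C)
            by (destruct J, X; simpl; ring).
          rewrite <- (Cmod_conj J), <- Cmod_mult.
          eapply Rle_trans; [apply Rle_abs| apply Re_le_Cmod]. }
        eapply Rle_trans; [exact CS|]. apply Rmult_le_compat_l; [lra|].
        unfold Ipath. rewrite Cmod_mult. apply Rmult_le_compat_r. apply Cmod_ge_0. apply HM; lra.
    - rewrite RInt_const. unfold scal; simpl. unfold mult; simpl. lra. }
  apply Rmult_le_reg_l with (Cmod J); auto.
Qed.

Ltac Rfix := match goal with |- @eq _ ?x ?y => change (@eq R x y) end.

Lemma Re_scal_R (s : R) (z : C) : Re (RtoC s * z)%C = s * Re z.
Proof. destruct z; simpl; ring. Qed.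
Lemma Im_scal_R (s : R) (z : C) : Im (RtoC s * z)%C = s * Im z.
Proof. destruct z; simpl; ring. Qed.

Lemma RInt_sub1 (h : R -> R) (s : R) : 0 <= s <= 1 -> ex_RInt h 0 s ->
  RInt h 0 s = RInt (fun y => s * h (s * y + 0)) 0 1.
Proof.
  intros Hs Hex.
  assert (A : RInt (fun y => scal s (h (s * y + 0))) 0 1 = RInt h (s * 0 + 0) (s * 1 + 0)).
  { apply (RInt_comp_lin (V:=R_CompleteNormedModule)). replace (s * 0 + 0) with 0 by ring.
    replace (s * 1 + 0) with s by ring. exact Hex. }
  replace (s * 0 + 0) with 0 in A by ring. replace (s * 1 + 0) with s in A by ring.
  rewrite <- A. reflexivity.
Qed.

Lemma RInt_sub2 (h : R -> R) (s : R) : 0 <= s <= 1 -> ex_RInt h s 1 ->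
  RInt h s 1 = RInt (fun y => (1 - s) * h ((1 - s) * y + s)) 0 1.
Proof.
  intros Hs Hex.
  assert (A : RInt (fun y => scal (1 - s) (h ((1 - s) * y + s))) 0 1 = RInt h ((1 - s) * 0 + s) ((1 - s) * 1 + s)).
  { apply (RInt_comp_lin (V:=R_CompleteNormedModule)). replace ((1 - s) * 0 + s) with s by ring.
    replace ((1 - s) * 1 + s) with 1 by ring. exact Hex. }
  replace ((1 - s) * 0 + s) with s in A by ring. replace ((1 - s) * 1 + s) with 1 in A by ring.
  rewrite <- A. reflexivity.
Qed.

Lemma RInt_rev01 (h : R -> R) : ex_RInt h 0 1 ->
  RInt (fun y => - h (- y + 1)) 0 1 = - RInt h 0 1.
Proof.
  intros Hex.
  assert (A : RInt (fun y => scal (-1) (h ((-1) * y + 1))) 0 1 = RInt h ((-1) * 0 + 1) ((-1) * 1 + 1)).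
  { apply (RInt_comp_lin (V:=R_CompleteNormedModule)). replace ((-1) * 0 + 1) with 1 by ring.
    replace ((-1) * 1 + 1) with 0 by ring. apply (ex_RInt_swap (V:=R_CompleteNormedModule)). exact Hex. }
  replace ((-1) * 0 + 1) with 1 in A by ring. replace ((-1) * 1 + 1) with 0 in A by ring.
  rewrite <- (opp_RInt_swap (V:=R_CompleteNormedModule) h 0 1 Hex) in A.
  transitivity (RInt (fun y => scal (-1) (h ((-1) * y + 1))) 0 1).
  - apply RInt_ext. intros. Rfix. unfold scal; simpl; unfold mult; simpl. f_equal. ring_simplify. f_equal. f_equal. ring.
  - rewrite A. reflexivity.
Qed.

Lemma seg_sub1 a b s y : seg a (seg a b s) y = seg a b (s * y + 0).
Proof. unfold seg. apply Ceq; simpl; ring. Qed.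
Lemma seg_sub2 a b s y : seg (seg a b s) b y = seg a b ((1 - s) * y + s).
Proof. unfold seg. apply Ceq; simpl; ring. Qed.
Lemma seg_rev a b y : seg b a y = seg a b (- y + 1).
Proof. unfold seg. apply Ceq; simpl; ring. Qed.

Lemma cint_split g a b s : Scont g a b -> 0 <= s <= 1 ->
  cint g a b = (cint g a (seg a b s) + cint g (seg a b s) b)%C.
Proof.
  intros Hg Hs. set (m := seg a b s).
  assert (Em : (m - a = RtoC s * (b - a))%C) by (unfold m, seg; ring).
  assert (Eb : (b - m = RtoC (1 - s) * (b - a))%C) by (unfold m, seg; apply Ceq; simpl; ring).
  apply Ceq.
  - rewrite Re_plus, !Re_cint.
    rewrite <- (RInt_Chasles (V:=R_CompleteNormedModule) _ 0 s 1) by (apply ex_Re; auto; lra).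
    rewrite (RInt_sub1 _ s) by (first [exact Hs | apply ex_Re; auto; lra]).
    rewrite (RInt_sub2 _ s) by (first [exact Hs | apply ex_Re; auto; lra]).
    match goal with |- @eq _ (plus ?x ?y) ?z => change (@eq R (x + y) z) end. f_equal; apply RInt_ext; intros y _; Rfix; unfold Ipath.
    + unfold m. rewrite seg_sub1. fold m. rewrite Em.
      replace (g (seg a b (s * y + 0)) * (RtoC s * (b - a)))%C with (RtoC s * (g (seg a b (s * y + 0)) * (b - a)))%C by ring.
      rewrite Re_scal_R. reflexivity.
    + unfold m. rewrite seg_sub2. fold m. rewrite Eb.
      replace (g (seg a b ((1 - s) * y + s)) * (RtoC (1 - s) * (b - a)))%C with (RtoC (1 - s) * (g (seg a b ((1 - s) * y + s)) * (b - a)))%C by ring.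
      rewrite Re_scal_R. reflexivity.
  - rewrite Im_plus, !Im_cint.
    rewrite <- (RInt_Chasles (V:=R_CompleteNormedModule) _ 0 s 1) by (apply ex_Im; auto; lra).
    rewrite (RInt_sub1 _ s) by (first [exact Hs | apply ex_Im; auto; lra]).
    rewrite (RInt_sub2 _ s) by (first [exact Hs | apply ex_Im; auto; lra]).
    match goal with |- @eq _ (plus ?x ?y) ?z => change (@eq R (x + y) z) end. f_equal; apply RInt_ext; intros y _; Rfix; unfold Ipath.
    + unfold m. rewrite seg_sub1. fold m. rewrite Em.
      replace (g (seg a b (s * y + 0)) * (RtoC s * (b - a)))%C with (RtoC s * (g (seg a b (s * y + 0)) * (b - a)))%C by ring.
      rewrite Im_scal_R. reflexivity.
    + unfold m. rewrite seg_sub2. fold m. rewrite Eb.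
      replace (g (seg a b ((1 - s) * y + s)) * (RtoC (1 - s) * (b - a)))%C with (RtoC (1 - s) * (g (seg a b ((1 - s) * y + s)) * (b - a)))%C by ring.
      rewrite Im_scal_R. reflexivity.
Qed.

Lemma cint_rev g a b : Scont g a b -> cint g b a = (- cint g a b)%C.
Proof.
  intros Hg. apply Ceq.
  - change (Re (cint g b a) = - Re (cint g a b)). rewrite !Re_cint.
    rewrite <- RInt_rev01 by (apply ex_Re; auto; lra).
    apply RInt_ext; intros y _; Rfix; unfold Ipath. rewrite seg_rev.
    replace (a - b)%C with (RtoC (-1) * (b - a))%C by (apply Ceq; simpl; ring).
    replace (g (seg a b (- y + 1)) * (RtoC (-1) * (b - a)))%C with (RtoC (-1) * (g (seg a b (- y + 1)) * (b - a)))%C by ring.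
    rewrite Re_scal_R. ring.
  - change (Im (cint g b a) = - Im (cint g a b)). rewrite !Im_cint.
    rewrite <- RInt_rev01 by (apply ex_Im; auto; lra).
    apply RInt_ext; intros y _; Rfix; unfold Ipath. rewrite seg_rev.
    replace (a - b)%C with (RtoC (-1) * (b - a))%C by (apply Ceq; simpl; ring).
    replace (g (seg a b (- y + 1)) * (RtoC (-1) * (b - a)))%C with (RtoC (-1) * (g (seg a b (- y + 1)) * (b - a)))%C by ring.
    rewrite Im_scal_R. ring.
Qed.

Lemma RInt_aff (A B : R) : RInt (fun t => A + B * t) 0 1 = A + B / 2.
Proof.
  apply is_RInt_unique.
  replace (A + B / 2) with (minus ((fun t => A * t + B * t ^ 2 / 2) 1) ((fun t => A * t + B * t ^ 2 / 2) 0))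
    by (unfold minus, plus, opp; simpl; field).
  apply (is_RInt_derive (V:=R_CompleteNormedModule) (fun t => A * t + B * t ^ 2 / 2) (fun t => A + B * t) 0 1).
  - intros x _. auto_derive; auto. simpl. field.
  - intros x _. apply (continuous_plus (K:=R_AbsRing) (V:=R_NormedModule)). apply continuous_const.
    apply (continuous_mult (K:=R_AbsRing)). apply continuous_const. apply continuous_id.
Qed.

Lemma cint_affine (c0 c1 a b : C) :
  cint (fun z => c0 + c1 * z)%C a b = (c0 * (b - a) + c1 * (b * b - a * a) * RtoC (/ 2))%C.
Proof.
  apply Ceq.
  - rewrite Re_cint.
    transitivity (RInt (fun t => Re ((c0 + c1 * a) * (b - a))%C + Re (c1 * (b - a) * (b - a))%C * t) 0 1).
    + apply RInt_ext. intros t _. Rfix. unfold Ipath, seg.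
      destruct c0, c1, a, b; simpl; ring.
    + rewrite RInt_aff. destruct c0, c1, a, b; simpl; field.
  - rewrite Im_cint.
    transitivity (RInt (fun t => Im ((c0 + c1 * a) * (b - a))%C + Im (c1 * (b - a) * (b - a))%C * t) 0 1).
    + apply RInt_ext. intros t _. Rfix. unfold Ipath, seg.
      destruct c0, c1, a, b; simpl; ring.
    + rewrite RInt_aff. destruct c0, c1, a, b; simpl; field.
Qed.

Lemma half_pow_S k : (/ 2) ^ (S k) = / 2 * (/ 2) ^ k.
Proof. reflexivity. Qed.

Lemma half_pow_pos k : 0 < (/ 2) ^ k.
Proof. apply pow_lt. lra. Qed.

Lemma half_pow_small eps : 0 < eps -> exists k, (/ 2) ^ k < eps.
Proof.
  intros He. destruct (pow_lt_1_zero (/ 2)) with eps as [N HN]; auto.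
  rewrite Rabs_pos_eq; lra.
  exists N. specialize (HN N (le_n N)). rewrite Rabs_pos_eq in HN; auto. left; apply half_pow_pos.
Qed.

Lemma cauchy_lim (s : nat -> R) :
  (forall k, - (/ 2) ^ k <= s (S k) - s k <= (/ 2) ^ k) ->
  exists L, forall k, - (2 * (/ 2) ^ k) <= s k - L <= 2 * (/ 2) ^ k.
Proof.
  intros H.
  set (l := fun k => s k - 2 * (/ 2) ^ k).
  set (u := fun k => s k + 2 * (/ 2) ^ k).
  assert (Hl : forall k, l k <= l (S k)).
  { intros k. unfold l. rewrite half_pow_S. specialize (H k). lra. }
  assert (Hu : forall k, u (S k) <= u k).
  { intros k. unfold u. rewrite half_pow_S. specialize (H k). lra. }
  assert (Hlm : forall k m, (k <= m)%nat -> l k <= l m).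
  { intros k m Hkm. induction Hkm. lra. eapply Rle_trans; eauto. }
  assert (Hum : forall k m, (k <= m)%nat -> u m <= u k).
  { intros k m Hkm. induction Hkm. lra. eapply Rle_trans; eauto. }
  assert (Hlu : forall k, l k <= u k) by (intros k; unfold l, u; pose proof (half_pow_pos k); lra).
  assert (Hlu2 : forall k j, l k <= u j).
  { intros k j. destruct (Nat.le_ge_cases k j) as [Hkj|Hkj].
    - eapply Rle_trans. apply (Hlm k j Hkj). apply Hlu.
    - eapply Rle_trans. apply Hlu. apply (Hum j k Hkj). }
  destruct (completeness (fun x => exists k, x = l k)) as [L [HL1 HL2]].
  { exists (u 0%nat). intros x [k ->]. apply Hlu2. }
  { exists (l 0%nat). exists 0%nat. reflexivity. }
  exists L. intros k.
  assert (A : l k <= L) by (apply HL1; exists k; reflexivity).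
  assert (B : L <= u k) by (apply HL2; intros x [j ->]; apply Hlu2).
  unfold l, u in *. lra.
Qed.

Lemma le_of_small_M (M r : R) : (forall k, r <= M * (/ 2) ^ k) -> r <= 0.
Proof.
  intros H. destruct (Rle_dec r 0) as [|Hr]; auto.
  destruct (half_pow_small (r / (Rabs M + 1))) as [k Hk].
  apply Rdiv_lt_0_compat; [lra| pose proof (Rabs_pos M); lra].
  specialize (H k). pose proof (half_pow_pos k). pose proof (Rabs_pos M).
  assert ((/ 2) ^ k * (Rabs M + 1) < r).
  { apply Rmult_lt_reg_r with (/ (Rabs M + 1)). apply Rinv_0_lt_compat; lra.
    rewrite Rmult_assoc, Rinv_r, Rmult_1_r by lra. exact Hk. }
  assert (M <= Rabs M) by apply Rle_abs. nra.
Qed.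

Lemma le_of_small (r : R) : (forall k, r <= 2 * (/ 2) ^ k) -> r <= 0.
Proof.
  intros H. destruct (Rle_dec r 0) as [|Hr]; auto.
  destruct (half_pow_small (r / 2)) as [k Hk]. lra.
  specialize (H k). lra.
Qed.

Definition Phi (a b c : C) (u : R * R) : C := (a + RtoC (fst u) * (b - a) + RtoC (snd u) * (c - a))%C.
Definition InS (u : R * R) : Prop := 0 <= fst u /\ 0 <= snd u /\ fst u + snd u <= 1.
Definition tri (g : C -> C) (p q r : C) : C := (cint g p q + cint g q r + cint g r p)%C.
Inductive Tr := mkTr (u1 u2 u3 : R * R).
Definition triT g a b c (T : Tr) : C :=
  match T with mkTr u1 u2 u3 => tri g (Phi a b c u1) (Phi a b c u2) (Phi a b c u3) end.
Definition mid (u v : R * R) : R * R := ((fst u + fst v) / 2, (snd u + snd v) / 2).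
Definition cv (u v : R * R) (t : R) : R * R := (fst u + t * (fst v - fst u), snd u + t * (snd v - snd u)).

Definition sub0 T := match T with mkTr u1 u2 u3 => mkTr u1 (mid u1 u2) (mid u3 u1) end.
Definition sub1 T := match T with mkTr u1 u2 u3 => mkTr (mid u1 u2) u2 (mid u2 u3) end.
Definition sub2 T := match T with mkTr u1 u2 u3 => mkTr (mid u3 u1) (mid u2 u3) u3 end.
Definition sub3 T := match T with mkTr u1 u2 u3 => mkTr (mid u2 u3) (mid u3 u1) (mid u1 u2) end.

Definition InT (T : Tr) : Prop := match T with mkTr u1 u2 u3 => InS u1 /\ InS u2 /\ InS u3 end.

Lemma Phi_seg a b c u v t : seg (Phi a b c u) (Phi a b c v) t = Phi a b c (cv u v t).
Proof. unfold seg, Phi, cv. apply Ceq; simpl; ring. Qed.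

Lemma Phi_mid a b c u v : Phi a b c (mid u v) = seg (Phi a b c u) (Phi a b c v) (/ 2).
Proof. unfold seg, Phi, mid. apply Ceq; simpl; field. Qed.

Lemma InS_cv u v t : InS u -> InS v -> 0 <= t <= 1 -> InS (cv u v t).
Proof.
  unfold InS, cv; simpl. intros [? [? ?]] [? [? ?]] [? ?].
  repeat split; nra.
Qed.

Lemma InS_mid u v : InS u -> InS v -> InS (mid u v).
Proof. unfold InS, mid; simpl. intros; lra. Qed.

Lemma InT_sub T : InT T -> InT (sub0 T) /\ InT (sub1 T) /\ InT (sub2 T) /\ InT (sub3 T).
Proof.
  destruct T as [u1 u2 u3]. simpl. intros [H1 [H2 H3]].
  assert (S12 := InS_mid _ _ H1 H2). assert (S23 := InS_mid _ _ H2 H3). assert (S31 := InS_mid _ _ H3 H1).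
  repeat match goal with |- _ /\ _ => split end; assumption.
Qed.

Definition HolT g a b c := forall u, InS u -> holo g (Phi a b c u).

Lemma Scont_Phi g a b c u v : HolT g a b c -> InS u -> InS v -> Scont g (Phi a b c u) (Phi a b c v).
Proof.
  intros HD Hu Hv t Ht. rewrite Phi_seg. apply holo_cont. apply HD. apply InS_cv; auto.
Qed.

Lemma triT_sub g a b c T : HolT g a b c -> InT T ->
  triT g a b c T = (triT g a b c (sub0 T) + triT g a b c (sub1 T) + triT g a b c (sub2 T) + triT g a b c (sub3 T))%C.
Proof.
  intros HD. destruct T as [u1 u2 u3]. simpl. intros [H1 [H2 H3]].
  unfold tri.
  assert (S12 := InS_mid _ _ H1 H2). assert (S23 := InS_mid _ _ H2 H3). assert (S31 := InS_mid _ _ H3 H1).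
  rewrite (cint_split g (Phi a b c u1) (Phi a b c u2) (/ 2)) by (try apply Scont_Phi; auto; lra).
  rewrite (cint_split g (Phi a b c u2) (Phi a b c u3) (/ 2)) by (try apply Scont_Phi; auto; lra).
  rewrite (cint_split g (Phi a b c u3) (Phi a b c u1) (/ 2)) by (try apply Scont_Phi; auto; lra).
  rewrite <- !Phi_mid.
  rewrite (cint_rev g (Phi a b c (mid u3 u1)) (Phi a b c (mid u1 u2))) by (apply Scont_Phi; auto).
  rewrite (cint_rev g (Phi a b c (mid u2 u3)) (Phi a b c (mid u3 u1))) by (apply Scont_Phi; auto).
  rewrite (cint_rev g (Phi a b c (mid u1 u2)) (Phi a b c (mid u2 u3))) by (apply Scont_Phi; auto).
  ring.
Qed.

Definition NT g a b c T := Cmod (triT g a b c T).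
Definition pick2 g a b c (T1 T2 : Tr) : Tr := if Rle_dec (NT g a b c T2) (NT g a b c T1) then T1 else T2.
Definition nextT g a b c T :=
  pick2 g a b c (pick2 g a b c (sub0 T) (sub1 T)) (pick2 g a b c (sub2 T) (sub3 T)).

Lemma pick2_ge g a b c T1 T2 : NT g a b c T1 <= NT g a b c (pick2 g a b c T1 T2) /\ NT g a b c T2 <= NT g a b c (pick2 g a b c T1 T2).
Proof. unfold pick2. destruct Rle_dec; lra. Qed.

Lemma pick2_cases g a b c T1 T2 : pick2 g a b c T1 T2 = T1 \/ pick2 g a b c T1 T2 = T2.
Proof. unfold pick2. destruct Rle_dec; auto. Qed.

Lemma nextT_cases g a b c T : nextT g a b c T = sub0 T \/ nextT g a b c T = sub1 T \/ nextT g a b c T = sub2 T \/ nextT g a b c T = sub3 T.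
Proof.
  unfold nextT.
  destruct (pick2_cases g a b c (pick2 g a b c (sub0 T) (sub1 T)) (pick2 g a b c (sub2 T) (sub3 T))) as [E|E]; rewrite E.
  - destruct (pick2_cases g a b c (sub0 T) (sub1 T)) as [E'|E']; rewrite E'; auto.
  - destruct (pick2_cases g a b c (sub2 T) (sub3 T)) as [E'|E']; rewrite E'; auto.
Qed.

Lemma Cmod4 (w x y z : C) : Cmod (w + x + y + z)%C <= Cmod w + Cmod x + Cmod y + Cmod z.
Proof.
  eapply Rle_trans. apply Cmod_triangle. apply Rplus_le_compat_r.
  eapply Rle_trans. apply Cmod_triangle. apply Rplus_le_compat_r.
  apply Cmod_triangle.
Qed.

Lemma nextT_ge g a b c T : HolT g a b c -> InT T -> NT g a b c T <= 4 * NT g a b c (nextT g a b c T).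
Proof.
  intros HD HT. unfold NT at 1. rewrite triT_sub by auto.
  destruct (pick2_ge g a b c (sub0 T) (sub1 T)) as [A0 A1].
  destruct (pick2_ge g a b c (sub2 T) (sub3 T)) as [A2 A3].
  destruct (pick2_ge g a b c (pick2 g a b c (sub0 T) (sub1 T)) (pick2 g a b c (sub2 T) (sub3 T))) as [B1 B2].
  fold (nextT g a b c T) in B1, B2.
  unfold NT in *.
  eapply Rle_trans. apply Cmod4. lra.
Qed.

Fixpoint seqT g a b c (n : nat) : Tr :=
  match n with O => mkTr (0, 0) (1, 0) (0, 1) | S k => nextT g a b c (seqT g a b c k) end.

Definition close (h : R) (u v : R * R) : Prop := - h <= fst u - fst v <= h /\ - h <= snd u - snd v <= h.
Definition Sz (h : R) (T : Tr) : Prop :=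
  match T with mkTr u1 u2 u3 => close h u1 u2 /\ close h u2 u3 /\ close h u1 u3 end.
Definition v1 (T : Tr) := match T with mkTr u1 _ _ => u1 end.

Lemma Sz_sub h T : Sz h T ->
  (Sz (h / 2) (sub0 T) /\ close h (v1 T) (v1 (sub0 T))) /\
  (Sz (h / 2) (sub1 T) /\ close h (v1 T) (v1 (sub1 T))) /\
  (Sz (h / 2) (sub2 T) /\ close h (v1 T) (v1 (sub2 T))) /\
  (Sz (h / 2) (sub3 T) /\ close h (v1 T) (v1 (sub3 T))).
Proof.
  destruct T as [[x1 y1] [x2 y2] [x3 y3]]. unfold Sz, close, sub0, sub1, sub2, sub3, v1, mid; simpl.
  intros; repeat split; lra.
Qed.

Lemma seqT_inv g a b c : HolT g a b c -> forall k,
  InT (seqT g a b c k) /\ Sz ((/ 2) ^ k) (seqT g a b c k) /\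
  close ((/ 2) ^ k) (v1 (seqT g a b c k)) (v1 (seqT g a b c (S k))).
Proof.
  intros HD k. induction k as [|k IH].
  - simpl.
    assert (I0 : InT (mkTr (0, 0) (1, 0) (0, 1))) by (unfold InT, InS; simpl; lra).
    assert (S0 : Sz 1 (mkTr (0, 0) (1, 0) (0, 1))) by (unfold Sz, close; simpl; lra).
    split; [exact I0|]. split; [exact S0|].
    destruct (Sz_sub 1 _ S0) as [[_ C0] [[_ C1] [[_ C2] [_ C3]]]].
    destruct (nextT_cases g a b c (mkTr (0, 0) (1, 0) (0, 1))) as [E|[E|[E|E]]]; rewrite E; auto.
  - destruct IH as [HI [HS HC]].
    assert (HI' : InT (seqT g a b c (S k))).
    { simpl. destruct (InT_sub _ HI) as [J0 [J1 [J2 J3]]].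
      destruct (nextT_cases g a b c (seqT g a b c k)) as [E|[E|[E|E]]]; rewrite E; auto. }
    assert (HS' : Sz ((/ 2) ^ S k) (seqT g a b c (S k))).
    { simpl. replace (/ 2 * (/ 2) ^ k) with ((/ 2) ^ k / 2) by (unfold Rdiv; ring).
      destruct (Sz_sub _ _ HS) as [[S0 _] [[S1 _] [[S2 _] [S3 _]]]].
      destruct (nextT_cases g a b c (seqT g a b c k)) as [E|[E|[E|E]]]; rewrite E; auto. }
    split; [exact HI'|]. split; [exact HS'|].
    change (seqT g a b c (S (S k))) with (nextT g a b c (seqT g a b c (S k))).
    destruct (Sz_sub _ _ HS') as [[_ C0] [[_ C1] [[_ C2] [_ C3]]]].
    destruct (nextT_cases g a b c (seqT g a b c (S k))) as [E|[E|[E|E]]]; rewrite E; auto.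
Qed.

Lemma close_sym e p q : close e p q -> close e q p.
Proof. unfold close; lra. Qed.
Lemma close_trans e1 e2 p q s : close e1 p q -> close e2 q s -> close (e1 + e2) p s.
Proof. unfold close; lra. Qed.
Lemma close_cv e p q s t : close e p s -> close e q s -> 0 <= t <= 1 -> close e (cv p q t) s.
Proof. unfold close, cv; simpl. intros [[? ?] [? ?]] [[? ?] [? ?]] [? ?]. repeat split; nra. Qed.

Lemma Phi_bound a b c e p q : close e p q ->
  Cmod (Phi a b c p - Phi a b c q)%C <= e * (Cmod (b - a)%C + Cmod (c - a)%C).
Proof.
  intros [Hx Hy].
  replace (Phi a b c p - Phi a b c q)%C with (RtoC (fst p - fst q) * (b - a) + RtoC (snd p - snd q) * (c - a))%C
    by (unfold Phi; apply Ceq; simpl; ring).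
  eapply Rle_trans. apply Cmod_triangle. rewrite !Cmod_mult, !Cmod_R.
  assert (Rabs (fst p - fst q) <= e) by (apply Rabs_le; lra).
  assert (Rabs (snd p - snd q) <= e) by (apply Rabs_le; lra).
  pose proof (Cmod_ge_0 (b - a)%C). pose proof (Cmod_ge_0 (c - a)%C).
  pose proof (Rabs_pos (fst p - fst q)). pose proof (Rabs_pos (snd p - snd q)).
  nra.
Qed.

Lemma Ccont_affine (c0 c1 : C) z : Ccont (fun w => c0 + c1 * w)%C z.
Proof. apply holo_cont. apply holo_plus. apply holo_const. apply holo_mult. apply holo_const. apply holo_id. Qed.

Lemma edge_bound g a b c zs X Y lam eps del h p q :
  HolT g a b c -> InS p -> InS q ->
  (forall w, Cmod (w - zs)%C < del -> Cmod (g w - g zs - (w - zs) * lam)%C <= eps * Cmod (w - zs)%C) ->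
  zs = Phi a b c (X, Y) -> close (3 * h) p (X, Y) -> close (3 * h) q (X, Y) -> close h q p ->
  3 * h * (Cmod (b - a)%C + Cmod (c - a)%C) < del -> 0 <= eps -> 0 <= h ->
  Cmod (cint (fun z => g z + RtoC (-1) * ((g zs - lam * zs) + lam * z))%C (Phi a b c p) (Phi a b c q))
    <= eps * (3 * h * (Cmod (b - a)%C + Cmod (c - a)%C)) * (h * (Cmod (b - a)%C + Cmod (c - a)%C)).
Proof.
  intros HD Hp Hq Hdiff Ezs Cp Cq Cpq Hdel Heps Hh.
  set (K := (Cmod (b - a)%C + Cmod (c - a)%C)) in *.
  assert (HK : 0 <= K) by (unfold K; pose proof (Cmod_ge_0 (b - a)%C); pose proof (Cmod_ge_0 (c - a)%C); lra).
  eapply Rle_trans. apply (cint_bound _ _ _ (eps * (3 * h * K))).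
  - intros t Ht. apply Ccont_plus. rewrite Phi_seg. apply holo_cont, HD, InS_cv; auto.
    apply Ccont_mult. apply Ccont_const. apply Ccont_affine.
  - intros t Ht. rewrite Phi_seg.
    set (w := Phi a b c (cv p q t)).
    assert (Hw : Cmod (w - zs)%C <= 3 * h * K).
    { rewrite Ezs. apply Phi_bound. apply close_cv; auto. }
    replace (g w + RtoC (-1) * (g zs - lam * zs + lam * w))%C with (g w - g zs - (w - zs) * lam)%C
      by (apply Ceq; simpl; ring).
    eapply Rle_trans; [apply Hdiff; lra|]. apply Rmult_le_compat_l; auto.
  - apply Rmult_le_compat_l. apply Rmult_le_pos; auto. apply Rmult_le_pos; lra.
    apply Phi_bound; auto.
Qed.

Lemma tri_affine (c0 c1 p q r : C) : tri (fun z => c0 + c1 * z)%C p q r = RtoC 0.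
Proof. unfold tri. rewrite !cint_affine. apply Ceq; simpl; field. Qed.

Lemma tri_decomp g (L : C -> C) p q r :
  Scont g p q -> Scont g q r -> Scont g r p ->
  Scont L p q -> Scont L q r -> Scont L r p ->
  tri g p q r = (tri (fun z => g z + RtoC (-1) * L z)%C p q r + tri L p q r)%C.
Proof.
  intros H1 H2 H3 L1 L2 L3.
  assert (E : forall u v, Scont g u v -> Scont L u v ->
    cint g u v = (cint (fun z => g z + RtoC (-1) * L z)%C u v + cint L u v)%C).
  { intros u v Hg HL.
    rewrite <- cint_plus.
    - apply cint_ext. intros t _. cbv beta. apply Ceq; unfold Re, Im; simpl; ring.
    - intros t Ht. apply Ccont_plus. apply Hg; auto. apply Ccont_mult. apply Ccont_const. apply HL; auto.
    - exact HL. }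
  unfold tri. rewrite (E p q), (E q r), (E r p) by auto. ring.
Qed.

Theorem goursat g a b c : HolT g a b c -> tri g a b c = RtoC 0.
Proof.
  intros HD.
  set (T := seqT g a b c).
  pose proof (seqT_inv g a b c HD) as INV.
  set (K := (Cmod (b - a)%C + Cmod (c - a)%C)).
  assert (HK : 0 <= K) by (unfold K; pose proof (Cmod_ge_0 (b - a)%C); pose proof (Cmod_ge_0 (c - a)%C); lra).
  destruct (cauchy_lim (fun k => fst (v1 (T k)))) as [X HX].
  { intros k. destruct (INV k) as [_ [_ [Hc _]]]. fold T in Hc. simpl in Hc. lra. }
  destruct (cauchy_lim (fun k => snd (v1 (T k)))) as [Y HY].
  { intros k. destruct (INV k) as [_ [_ [_ Hc]]]. fold T in Hc. simpl in Hc. lra. }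
  assert (Cl : forall k, close (2 * (/ 2) ^ k) (v1 (T k)) (X, Y)).
  { intros k. split; simpl; [apply HX|apply HY]. }
  assert (IS : InS (X, Y)).
  { assert (I1 : forall k, InS (v1 (T k))).
    { intros k. destruct (INV k) as [HI _]. fold T in HI. destruct (T k) as [u1 u2 u3]. apply HI. }
    unfold InS; simpl. repeat split.
    - assert (- X <= 0) by (apply le_of_small; intros k; specialize (HX k); specialize (I1 k); destruct I1; lra). lra.
    - assert (- Y <= 0) by (apply le_of_small; intros k; specialize (HY k); specialize (I1 k); destruct I1 as [_ [? _]]; lra). lra.
    - assert (X + Y - 1 <= 0).
      { apply (le_of_small_M 4). intros k. specialize (HX k); specialize (HY k); specialize (I1 k); destruct I1 as [_ [_ ?]]; lra. }
      lra. }
  set (zs := Phi a b c (X, Y)).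
  destruct (holo_Cdiff g zs (HD _ IS)) as [lam Hlam].
  set (L := fun z => ((g zs - lam * zs) + lam * z)%C).
  assert (LB : forall k, NT g a b c (T 0%nat) * ((/ 2) ^ k * (/ 2) ^ k) <= NT g a b c (T k)).
  { induction k. simpl. lra.
    destruct (INV k) as [HI _]. fold T in HI.
    pose proof (nextT_ge g a b c (T k) HD HI) as Hn.
    change (T (S k)) with (nextT g a b c (T k)). simpl pow. lra. }
  assert (UB : forall eps, 0 < eps -> exists k, NT g a b c (T k) <= 3 * (eps * (3 * (/ 2) ^ k * K) * ((/ 2) ^ k * K))).
  { intros eps Heps. destruct (Hlam eps Heps) as [del [Hdel Hw]].
    destruct (half_pow_small (del / (3 * K + 1))) as [k Hk].
    { apply Rdiv_lt_0_compat; lra. }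
    exists k.
    set (h := (/ 2) ^ k). assert (Hh : 0 < h) by apply half_pow_pos.
    assert (Hhd : 3 * h * K < del).
    { assert (h * (3 * K + 1) < del).
      { apply Rmult_lt_reg_r with (/ (3 * K + 1)). apply Rinv_0_lt_compat; lra.
        rewrite Rmult_assoc, Rinv_r, Rmult_1_r by lra. exact Hk. }
      nra. }
    destruct (INV k) as [HI [HS _]]. fold T h in HI, HS.
    pose proof (Cl k) as Ck. fold T h in Ck.
    destruct (T k) as [u1 u2 u3]. simpl in HI, HS, Ck. destruct HI as [I1 [I2 I3]].
    destruct HS as [S12 [S23 S13]].
    assert (C1 : close (3 * h) u1 (X, Y)).
    { replace (3 * h) with (h + 2 * h) by ring. apply (close_trans h (2 * h) u1 u1); auto. unfold close; lra. }
    assert (C2 : close (3 * h) u2 (X, Y)).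
    { replace (3 * h) with (h + 2 * h) by ring. apply (close_trans h (2 * h) u2 u1); auto. apply close_sym; auto. }
    assert (C3 : close (3 * h) u3 (X, Y)).
    { replace (3 * h) with (h + 2 * h) by ring. apply (close_trans h (2 * h) u3 u1); auto. apply close_sym; auto. }
    unfold NT, triT.
    assert (SL : forall p q, Scont L p q) by (intros p q t _; apply Ccont_affine).
    rewrite (tri_decomp g L) by (first [apply SL | apply Scont_Phi; auto]).
    unfold L at 2. rewrite tri_affine. rewrite Cplus_0_r.
    unfold tri.
    eapply Rle_trans. apply Cmod_triangle.
    eapply Rle_trans. apply Rplus_le_compat_r. apply Cmod_triangle.
    assert (E : forall p q, InS p -> InS q -> close (3 * h) p (X, Y) -> close (3 * h) q (X, Y) -> close h q p ->
      Cmod (cint (fun z => g z + RtoC (-1) * L z)%C (Phi a b c p) (Phi a b c q)) <= eps * (3 * h * K) * (h * K)).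
    { intros p q Hp Hq Cp Cq Cpq. unfold L.
      apply (edge_bound g a b c zs X Y lam eps del h p q HD Hp Hq); auto; lra. }
    pose proof (E u1 u2 I1 I2 C1 C2 (close_sym _ _ _ S12)).
    pose proof (E u2 u3 I2 I3 C2 C3 (close_sym _ _ _ S23)).
    pose proof (E u3 u1 I3 I1 C3 C1 S13).
    lra. }
  assert (Z : NT g a b c (T 0%nat) = 0).
  { destruct (Rle_dec (NT g a b c (T 0%nat)) 0) as [Hle|Hgt].
    - pose proof (Cmod_ge_0 (triT g a b c (T 0%nat))). unfold NT in *. lra.
    - exfalso. set (N0 := NT g a b c (T 0%nat)) in *.
      set (eps := N0 / (9 * K * K + 1)).
      assert (Heps : 0 < eps) by (unfold eps; apply Rdiv_lt_0_compat; nra).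
      destruct (UB eps Heps) as [k Hk].
      specialize (LB k). fold N0 in LB.
      set (h := (/ 2) ^ k) in *. assert (0 < h) by apply half_pow_pos.
      assert (N0 <= 9 * eps * K * K).
      { apply Rmult_le_reg_r with (h * h). nra. nra. }
      assert (eps * (9 * K * K + 1) = N0) by (unfold eps; field; nra).
      nra. }
  unfold NT in Z. apply Cmod_eq_0 in Z.
  simpl in Z. unfold Phi in Z. simpl in Z.
  replace (a + RtoC 0 * (b - a) + RtoC 0 * (c - a))%C with a in Z by (apply Ceq; unfold Re, Im; simpl; ring).
  replace (a + RtoC 1 * (b - a) + RtoC 0 * (c - a))%C with b in Z by (apply Ceq; unfold Re, Im; simpl; ring).
  replace (a + RtoC 0 * (b - a) + RtoC 1 * (c - a))%C with c in Z by (apply Ceq; unfold Re, Im; simpl; ring).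
  exact Z.
Qed.

Definition HullP (p b c z : C) : Prop := exists u, InS u /\ z = Phi p b c u.

Lemma Phi_zero_param p b c x y :
  Im (Cconj (b - p) * (c - p))%C <> 0 -> Phi p b c (x, y) = p -> x = 0 /\ y = 0.
Proof.
  intros HD E. unfold Phi in E. simpl in E.
  assert (E' : (RtoC x * (b - p) + RtoC y * (c - p))%C = RtoC 0).
  { replace (RtoC x * (b - p) + RtoC y * (c - p))%C with ((p + RtoC x * (b - p) + RtoC y * (c - p)) - p)%C by ring.
    rewrite E. ring. }
  pose proof (f_equal Re E') as Ea. pose proof (f_equal Im E') as Eb.
  destruct p as [p1 p2], b as [b1 b2], c as [c1 c2].
  unfold Re, Im in *. simpl in HD, Ea, Eb.
  set (D := (b1 + - p1) * (c2 + - p2) + - (b2 + - p2) * (c1 + - p1)) in *.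
  assert (y * D = 0).
  { transitivity ((b1 + - p1) * (x * (b2 + - p2) + 0 * (b1 + - p1) + (y * (c2 + - p2) + 0 * (c1 + - p1))) -
                  (b2 + - p2) * (x * (b1 + - p1) - 0 * (b2 + - p2) + (y * (c1 + - p1) - 0 * (c2 + - p2)))).
    unfold D; ring. rewrite Ea, Eb. ring. }
  assert (x * D = 0).
  { transitivity ((c2 + - p2) * (x * (b1 + - p1) - 0 * (b2 + - p2) + (y * (c1 + - p1) - 0 * (c2 + - p2))) -
                  (c1 + - p1) * (x * (b2 + - p2) + 0 * (b1 + - p1) + (y * (c2 + - p2) + 0 * (c1 + - p1)))).
    unfold D; ring. rewrite Ea, Eb. ring. }
  split; [apply (Rmult_eq_reg_r D); lra | apply (Rmult_eq_reg_r D); lra].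
Qed.

Lemma Scont_hull g p b c u v : (forall z, HullP p b c z -> Ccont g z) -> InS u -> InS v ->
  Scont g (Phi p b c u) (Phi p b c v).
Proof. intros H Hu Hv t Ht. rewrite Phi_seg. apply H. exists (cv u v t). split; auto. apply InS_cv; auto. Qed.

Lemma Phi_param_eq p b c u v : u = v -> Phi p b c u = Phi p b c v.
Proof. intros ->; auto. Qed.

Lemma corner g p b c :
  Im (Cconj (b - p) * (c - p))%C <> 0 ->
  (forall z, HullP p b c z -> Ccont g z) ->
  (forall z, HullP p b c z -> z <> p -> holo g z) ->
  tri g p b c = RtoC 0.
Proof.
  intros HD Hc Hh.
  set (P := Phi p b c).
  assert (Pp : P (0, 0) = p) by (unfold P, Phi; apply Ceq; unfold Re, Im; simpl; ring).
  assert (Pb : P (1, 0) = b) by (unfold P, Phi; apply Ceq; unfold Re, Im; simpl; ring).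
  assert (Pc : P (0, 1) = c) by (unfold P, Phi; apply Ceq; unfold Re, Im; simpl; ring).
  assert (I00 : InS (0, 0)) by (unfold InS; simpl; lra).
  assert (I10 : InS (1, 0)) by (unfold InS; simpl; lra).
  assert (I01 : InS (0, 1)) by (unfold InS; simpl; lra).
  assert (Dec : forall eps, 0 < eps < 1 ->
    tri g p b c = (tri g p (P (eps, 0)) (P (0, eps)) + tri g (P (eps, 0)) b c + tri g (P (eps, 0)) c (P (0, eps)))%C).
  { intros eps He.
    assert (Ie0 : InS (eps, 0)) by (unfold InS; simpl; lra).
    assert (I0e : InS (0, eps)) by (unfold InS; simpl; lra).
    unfold tri.
    rewrite <- Pp, <- Pb, <- Pc.
    rewrite (cint_split g (P (0, 0)) (P (1, 0)) eps) by (try (apply Scont_hull; auto); lra).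
    rewrite (cint_split g (P (0, 1)) (P (0, 0)) (1 - eps)) by (try (apply Scont_hull; auto); lra).
    unfold P. rewrite !Phi_seg.
    replace (cv (0, 0) (1, 0) eps) with (eps, 0) by (unfold cv; simpl; f_equal; ring).
    replace (cv (0, 1) (0, 0) (1 - eps)) with (0, eps) by (unfold cv; simpl; f_equal; ring).
    rewrite (cint_rev g (Phi p b c (eps, 0)) (Phi p b c (0, 1))) by (apply Scont_hull; auto).
    rewrite (cint_rev g (Phi p b c (eps, 0)) (Phi p b c (0, eps))) by (apply Scont_hull; auto).
    ring. }
  assert (Big : forall eps, 0 < eps < 1 -> tri g (P (eps, 0)) b c = RtoC 0 /\ tri g (P (eps, 0)) c (P (0, eps)) = RtoC 0).
  { intros eps He. split; apply goursat; intros [x y] Hu; destruct Hu as [Hx [Hy Hxy]]; simpl in Hx, Hy, Hxy.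
    - set (u := (eps * (1 - y) + x * (1 - eps), y)).
      assert (E : Phi (P (eps, 0)) b c (x, y) = P u) by (unfold u, P, Phi; apply Ceq; unfold Re, Im; simpl; ring).
      assert (Iu : InS u) by (unfold u, InS; simpl; repeat split; nra).
      rewrite E. apply Hh. exists u; split; auto.
      intro Ez. apply Phi_zero_param in Ez; auto. unfold u in Ez; simpl in Ez. destruct Ez as [E1 E2]. subst y. nra.
    - set (u := (eps * (1 - x - y), x + y * eps)).
      assert (E : Phi (P (eps, 0)) c (P (0, eps)) (x, y) = P u) by (unfold u, P, Phi; apply Ceq; unfold Re, Im; simpl; ring).
      assert (Iu : InS u) by (unfold u, InS; simpl; repeat split; nra).
      rewrite E. apply Hh. exists u; split; auto.
      intro Ez. apply Phi_zero_param in Ez; auto. unfold u in Ez; simpl in Ez. destruct Ez as [E1 E2]. nra. }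
  set (K := (Cmod (b - p)%C + Cmod (c - p)%C)).
  assert (HK : 0 <= K) by (unfold K; pose proof (Cmod_ge_0 (b - p)%C); pose proof (Cmod_ge_0 (c - p)%C); lra).
  destruct (Hc p (ex_intro _ (0, 0) (conj I00 (eq_sym Pp))) 1 Rlt_0_1) as [del [Hdel Hcont]].
  set (B := Cmod (g p) + 1).
  assert (HB : 0 < B) by (unfold B; pose proof (Cmod_ge_0 (g p)); lra).
  assert (Small : forall eps, 0 < eps < 1 -> eps * K < del -> Cmod (tri g p (P (eps, 0)) (P (0, eps))) <= 3 * (B * (eps * K))).
  { intros eps He HeK.
    assert (Ie0 : InS (eps, 0)) by (unfold InS; simpl; lra).
    assert (I0e : InS (0, eps)) by (unfold InS; simpl; lra).
    assert (Edge : forall u v, InS u -> InS v -> close eps u (0, 0) -> close eps v (0, 0) ->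
      close eps v u -> Cmod (cint g (P u) (P v)) <= B * (eps * K)).
    { intros u v Hu Hv Cu Cv Cuv. eapply Rle_trans. apply (cint_bound _ _ _ B).
      - apply Scont_hull; auto.
      - intros t Ht. unfold P. rewrite Phi_seg.
        assert (Hw : Cmod (Phi p b c (cv u v t) - p)%C <= eps * K).
        { rewrite <- Pp at 2. unfold P. apply Phi_bound. apply close_cv; auto. }
        specialize (Hcont (Phi p b c (cv u v t)) ltac:(lra)).
        unfold B. pose proof (Cmod_triangle (g (Phi p b c (cv u v t)) - g p)%C (g p)).
        replace (g (Phi p b c (cv u v t)) - g p + g p)%C with (g (Phi p b c (cv u v t))) in H by ring. lra.
      - apply Rmult_le_compat_l; [lra|]. unfold P. apply Phi_bound; auto. }
    unfold tri. rewrite <- Pp.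
    eapply Rle_trans. apply Cmod_triangle.
    eapply Rle_trans. apply Rplus_le_compat_r. apply Cmod_triangle.
    assert (c0 : close eps (0, 0) (0, 0)) by (unfold close; simpl; lra).
    assert (c1 : close eps (eps, 0) (0, 0)) by (unfold close; simpl; lra).
    assert (c2 : close eps (0, eps) (0, 0)) by (unfold close; simpl; lra).
    assert (c12 : close eps (0, eps) (eps, 0)) by (unfold close; simpl; lra).
    pose proof (Edge (0, 0) (eps, 0) I00 Ie0 c0 c1 c1).
    pose proof (Edge (eps, 0) (0, eps) Ie0 I0e c1 c2 c12).
    pose proof (Edge (0, eps) (0, 0) I0e I00 c2 c0 (close_sym _ _ _ c2)).
    lra. }
  apply Cmod_eq_0.
  set (N0 := Cmod (tri g p b c)).
  assert (HN : forall eps, 0 < eps < 1 -> eps * K < del -> N0 <= 3 * (B * (eps * K))).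
  { intros eps He HeK. unfold N0. rewrite (Dec eps He).
    destruct (Big eps He) as [Z1 Z2]. rewrite Z1, Z2, !Cplus_0_r. apply Small; auto. }
  destruct (Rle_dec N0 0) as [Hle|Hgt].
  { pose proof (Cmod_ge_0 (tri g p b c)). fold N0 in H. lra. }
  exfalso.
  set (eps := Rmin (/ 2) (Rmin (del / (K + 1)) (N0 / (6 * B * (K + 1))))).
  assert (He1 : eps <= / 2) by apply Rmin_l.
  assert (He2 : eps <= del / (K + 1)) by (eapply Rle_trans; [apply Rmin_r| apply Rmin_l]).
  assert (He3 : eps <= N0 / (6 * B * (K + 1))) by (eapply Rle_trans; [apply Rmin_r| apply Rmin_r]).
  assert (He0 : 0 < eps).
  { unfold eps. apply Rmin_pos; [lra|]. apply Rmin_pos; apply Rdiv_lt_0_compat; nra. }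
  assert (A1 : eps * (K + 1) <= del) by (apply Rmult_le_reg_r with (/ (K + 1)); [apply Rinv_0_lt_compat; lra|];
    rewrite Rmult_assoc, Rinv_r, Rmult_1_r by lra; exact He2).
  assert (A2 : eps * (6 * B * (K + 1)) <= N0) by (apply Rmult_le_reg_r with (/ (6 * B * (K + 1))); [apply Rinv_0_lt_compat; nra|];
    rewrite Rmult_assoc, Rinv_r, Rmult_1_r by nra; exact He3).
  specialize (HN eps ltac:(lra) ltac:(nra)).
  nra.
Qed.

Definition V (rho th : R) (k : nat) : C := (rho * cos (INR k * th), rho * sin (INR k * th)).
Fixpoint csum (n : nat) (f : nat -> C) : C := match n with O => RtoC 0 | S m => (csum m f + f m)%C end.
Definition Pint g rho th N := csum N (fun k => cint g (V rho th k) (V rho th (S k))).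

Lemma csum_tele (n : nat) (A s : nat -> C) :
  csum n (fun k => A k + (s k - s (S k)))%C = (csum n A + (s O - s n))%C.
Proof. induction n; simpl. ring. rewrite IHn. ring. Qed.

Lemma csum_ext n (f g : nat -> C) : (forall k, (k < n)%nat -> f k = g k) -> csum n f = csum n g.
Proof. induction n; simpl; intros H; auto. rewrite IHn, H; auto. Qed.

Lemma csum_zero n (f : nat -> C) : (forall k, (k < n)%nat -> f k = RtoC 0) -> csum n f = RtoC 0.
Proof. induction n; simpl; intros H; auto. rewrite IHn, H; auto. ring. Qed.

Lemma Cmod_sq (z : C) : Cmod z * Cmod z = Re z * Re z + Im z * Im z.
Proof. rewrite <- Rsqr_def. unfold Rsqr. transitivity (Cmod z ^ 2). ring. rewrite Cmod2_alt. ring. Qed.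

Section Geo.
End Geo.

Lemma V_S rho th k : V rho th (S k) = (rho * (cos (INR k * th) * cos th - sin (INR k * th) * sin th),
                                       rho * (sin (INR k * th) * cos th + cos (INR k * th) * sin th)).
Proof.
  unfold V. rewrite S_INR. replace ((INR k + 1) * th) with (INR k * th + th) by ring.
  rewrite cos_plus, sin_plus. reflexivity.
Qed.

Lemma geo_im rho th k : Im (Cconj (V rho th k) * V rho th (S k))%C = rho * rho * sin th.
Proof.
  rewrite V_S. unfold V. unfold Cconj, Im, Re; simpl.
  pose proof (sin2_cos2 (INR k * th)) as E. unfold Rsqr in E.
  transitivity (rho * rho * sin th * (sin (INR k * th) * sin (INR k * th) + cos (INR k * th) * cos (INR k * th))).
  ring. rewrite E. ring.
Qed.

Lemma geo_edge rho th k : Cmod (V rho th (S k) - V rho th k)%C * Cmod (V rho th (S k) - V rho th k)%C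
  = 2 * (rho * rho) * (1 - cos th).
Proof.
  rewrite Cmod_sq. rewrite V_S. unfold V. unfold Im, Re; simpl.
  pose proof (sin2_cos2 (INR k * th)) as E. unfold Rsqr in E.
  pose proof (sin2_cos2 th) as E2. unfold Rsqr in E2.
  set (ca := cos (INR k * th)) in *. set (sa := sin (INR k * th)) in *.
  set (ct := cos th) in *. set (st := sin th) in *.
  transitivity (rho * rho * ((sa * sa + ca * ca) * (st * st + ct * ct) + (sa * sa + ca * ca) - 2 * ct * (sa * sa + ca * ca))).
  ring. rewrite E, E2. ring.
Qed.

Lemma geo_mod rho th k : 0 <= rho -> Cmod (V rho th k) = rho.
Proof.
  intros H. unfold V, Cmod. cbn [fst snd].
  pose proof (sin2_cos2 (INR k * th)) as E. unfold Rsqr in E.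
  replace ((rho * cos (INR k * th)) ^ 2 + (rho * sin (INR k * th)) ^ 2) with (rho ^ 2)
    by (transitivity (rho ^ 2 * (sin (INR k * th) * sin (INR k * th) + cos (INR k * th) * cos (INR k * th))); [rewrite E; ring| ring]).
  apply sqrt_pow2; auto.
Qed.

Lemma geo_im_e rho th k : Im (Cconj (V rho th k) * (V rho th (S k) - V rho th k))%C = rho * rho * sin th.
Proof.
  rewrite <- (geo_im rho th k). unfold V. unfold Cconj, Im, Re; simpl. ring.
Qed.

Lemma Im_conj_bound (z e : C) : Rabs (Im (Cconj z * e))%C <= Cmod z * Cmod e.
Proof.
  rewrite <- (Cmod_conj z), <- Cmod_mult. apply Im_le_Cmod.
Qed.

Lemma geo_left rho th k (z : C) :
  Im (Cconj (V rho th k - z) * (V rho th (S k) - V rho th k))%C >=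
    rho * rho * sin th - Cmod z * Cmod (V rho th (S k) - V rho th k)%C.
Proof.
  replace (Im (Cconj (V rho th k - z) * (V rho th (S k) - V rho th k))%C)
    with (Im (Cconj (V rho th k) * V rho th (S k))%C - Im (Cconj z * (V rho th (S k) - V rho th k))%C)
    by (unfold V; unfold Cconj, Im, Re; simpl; ring).
  rewrite geo_im.
  pose proof (Im_conj_bound z (V rho th (S k) - V rho th k)%C).
  pose proof (Rle_abs (Im (Cconj z * (V rho th (S k) - V rho th k))%C)). lra.
Qed.

Definition PolyOK (rho th : R) (N : nat) : Prop := 0 < rho < 1 /\ (3 <= N)%nat /\ th = 2 * PI / INR N.
Definition m2 rho th := rho * rho * (1 + cos th) / 2.
Definition Inner rho th (z : C) := Cmod z * Cmod z < m2 rho th.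

Lemma PolyOK_th rho th N : PolyOK rho th N -> 0 < sin th /\ cos th < 1 /\ -1 < cos th.
Proof.
  intros [Hr [HN Hth]].
  assert (HN' : 3 <= INR N) by (replace 3 with (INR 3) by (simpl; ring); apply le_INR; auto).
  assert (Hpos : 0 < th) by (rewrite Hth; apply Rdiv_lt_0_compat; [pose proof PI_RGT_0; lra| lra]).
  assert (Hlt : th < PI).
  { rewrite Hth. apply Rmult_lt_reg_r with (INR N). lra. unfold Rdiv. rewrite Rmult_assoc, Rinv_l by lra.
    pose proof PI_RGT_0. nra. }
  assert (Hs : 0 < sin th) by (apply sin_gt_0; auto).
  pose proof (sin2_cos2 th) as E. unfold Rsqr in E.
  split; auto. split; nra.
Qed.

Lemma V_N rho th N : PolyOK rho th N -> V rho th N = V rho th 0.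
Proof.
  intros [Hr [HN Hth]]. unfold V. simpl INR.
  assert (HN' : 0 < INR N) by (apply lt_0_INR; lia).
  replace (INR N * th) with (2 * PI) by (rewrite Hth; field; lra).
  rewrite cos_2PI, sin_2PI, Rmult_0_l, cos_0, sin_0. reflexivity.
Qed.

Lemma sq_lt (x y : R) : 0 <= x -> 0 <= y -> x * x < y * y -> x < y.
Proof. intros. nra. Qed.

Lemma inner_bound rho th N (z : C) : PolyOK rho th N -> Inner rho th z -> forall k,
  Cmod z * Cmod (V rho th (S k) - V rho th k)%C < rho * rho * sin th.
Proof.
  intros HP Hz k. destruct (PolyOK_th _ _ _ HP) as [Hs [Hc1 Hc2]].
  destruct HP as [Hr _].
  apply sq_lt. apply Rmult_le_pos; apply Cmod_ge_0. nra.
  replace (Cmod z * Cmod (V rho th (S k) - V rho th k)%C * (Cmod z * Cmod (V rho th (S k) - V rho th k)%C))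
    with ((Cmod z * Cmod z) * (Cmod (V rho th (S k) - V rho th k)%C * Cmod (V rho th (S k) - V rho th k)%C)) by ring.
  rewrite geo_edge. unfold Inner, m2 in Hz.
  pose proof (sin2_cos2 th) as E. unfold Rsqr in E.
  assert (0 < 2 * (rho * rho) * (1 - cos th)) by nra.
  apply Rlt_le_trans with (rho * rho * (1 + cos th) / 2 * (2 * (rho * rho) * (1 - cos th))).
  apply Rmult_lt_compat_r; auto.
  right. transitivity (rho * rho * (rho * rho) * (1 - cos th * cos th)). field. replace (1 - cos th * cos th) with (sin th * sin th) by lra. ring.
Qed.

Lemma inner_left rho th N (z : C) : PolyOK rho th N -> Inner rho th z -> forall k,
  0 < Im (Cconj (V rho th k - z) * (V rho th (S k) - V rho th k))%C.
Proof.
  intros HP Hz k. pose proof (geo_left rho th k z). pose proof (inner_bound rho th N z HP Hz k). lra.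
Qed.

Lemma nondeg rho th N (z : C) : PolyOK rho th N -> Inner rho th z -> forall k,
  0 < Im (Cconj (V rho th k - z) * (V rho th (S k) - z))%C.
Proof.
  intros HP Hz k. pose proof (inner_left rho th N z HP Hz k).
  replace (Im (Cconj (V rho th k - z) * (V rho th (S k) - z))%C)
    with (Im (Cconj (V rho th k - z) * (V rho th (S k) - V rho th k))%C); auto.
  unfold V, Cconj, Im, Re; simpl; ring.
Qed.

Lemma edge_far rho th k (z : C) t :
  Cmod (seg (V rho th k) (V rho th (S k)) t - z)%C * Cmod (V rho th (S k) - V rho th k)%C >=
  Im (Cconj (V rho th k - z) * (V rho th (S k) - V rho th k))%C.
Proof.
  replace (Im (Cconj (V rho th k - z) * (V rho th (S k) - V rho th k))%C)
    with (Im (Cconj (seg (V rho th k) (V rho th (S k)) t - z) * (V rho th (S k) - V rho th k))%C)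
    by (unfold seg, V, Cconj, Im, Re; simpl; ring).
  pose proof (Im_conj_bound (seg (V rho th k) (V rho th (S k)) t - z)%C (V rho th (S k) - V rho th k)%C).
  pose proof (Rle_abs (Im (Cconj (seg (V rho th k) (V rho th (S k)) t - z) * (V rho th (S k) - V rho th k))%C)).
  lra.
Qed.

Lemma Cmod_conv3 (p v w : C) x y : 0 <= x -> 0 <= y -> x + y <= 1 ->
  Cmod (p + RtoC x * (v - p) + RtoC y * (w - p))%C <= (1 - x - y) * Cmod p + x * Cmod v + y * Cmod w.
Proof.
  intros Hx Hy Hxy.
  replace (p + RtoC x * (v - p) + RtoC y * (w - p))%C with (RtoC (1 - x - y) * p + RtoC x * v + RtoC y * w)%C
    by (apply Ceq; unfold Re, Im; simpl; ring).
  eapply Rle_trans. apply Cmod_triangle. eapply Rle_trans. apply Rplus_le_compat_r. apply Cmod_triangle.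
  rewrite !Cmod_mult, !Cmod_R, !Rabs_pos_eq by lra. lra.
Qed.

Lemma conv_lt (x y a b c : R) : 0 <= x -> 0 <= y -> x + y <= 1 -> a < 1 -> b < 1 -> c < 1 ->
  (1 - x - y) * a + x * b + y * c < 1.
Proof.
  intros Hx Hy Hxy Ha Hb Hc.
  assert (E : 1 - ((1 - x - y) * a + x * b + y * c) = (1 - x - y) * (1 - a) + x * (1 - b) + y * (1 - c)) by ring.
  assert (P1 : 0 <= (1 - x - y) * (1 - a)) by (apply Rmult_le_pos; lra).
  assert (P2 : 0 <= x * (1 - b)) by (apply Rmult_le_pos; lra).
  assert (P3 : 0 <= y * (1 - c)) by (apply Rmult_le_pos; lra).
  destruct (Rlt_or_le 0 x) as [Hx'|Hx'].
  - assert (0 < x * (1 - b)) by (apply Rmult_lt_0_compat; lra). lra.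
  - destruct (Rlt_or_le 0 y) as [Hy'|Hy'].
    + assert (0 < y * (1 - c)) by (apply Rmult_lt_0_compat; lra). lra.
    + assert (0 < (1 - x - y) * (1 - a)) by (apply Rmult_lt_0_compat; lra). lra.
Qed.

Lemma hull_in_D rho th N (p : C) k w : PolyOK rho th N -> Cmod p < 1 ->
  HullP p (V rho th k) (V rho th (S k)) w -> Cmod w < 1.
Proof.
  intros HP Hp [[x y] [[Hx [Hy Hxy]] ->]]. simpl in Hx, Hy, Hxy.
  destruct HP as [Hr _].
  unfold Phi. simpl fst; simpl snd.
  eapply Rle_lt_trans. apply Cmod_conv3; auto.
  rewrite (geo_mod rho th k), (geo_mod rho th (S k)) by lra. apply conv_lt; lra.
Qed.

Lemma seg_in_D (p v : C) t : Cmod p < 1 -> Cmod v < 1 -> 0 <= t <= 1 -> Cmod (seg p v t) < 1.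
Proof.
  intros Hp Hv Ht. unfold seg.
  replace (p + RtoC t * (v - p))%C with (p + RtoC t * (v - p) + RtoC 0 * (v - p))%C by (apply Ceq; unfold Re, Im; simpl; ring).
  eapply Rle_lt_trans. apply Cmod_conv3; lra. apply conv_lt; lra.
Qed.

Theorem G_poly rho th N (g : C -> C) (p : C) : PolyOK rho th N -> Inner rho th p ->
  (forall z, Cmod z < 1 -> Ccont g z) -> (forall z, Cmod z < 1 -> z <> p -> holo g z) ->
  Pint g rho th N = RtoC 0.
Proof.
  intros HP Hin Hc Hh.
  assert (Hr : 0 < rho < 1) by apply HP.
  assert (Hp : Cmod p < 1).
  { unfold Inner, m2 in Hin. destruct (PolyOK_th _ _ _ HP) as [_ [H1 H2]].
    apply sq_lt; [apply Cmod_ge_0| lra|]. nra. }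
  assert (VD : forall k, Cmod (V rho th k) < 1) by (intros; rewrite geo_mod; lra).
  assert (SP : forall k, Scont g p (V rho th k)).
  { intros k t Ht. apply Hc. apply seg_in_D; auto. }
  assert (Fan : Pint g rho th N = csum N (fun k => tri g p (V rho th k) (V rho th (S k)))).
  { unfold Pint.
    rewrite (csum_ext N (fun k => tri g p (V rho th k) (V rho th (S k)))
       (fun k => cint g (V rho th k) (V rho th (S k)) + (cint g p (V rho th k) - cint g p (V rho th (S k))))%C).
    - rewrite csum_tele. rewrite (V_N rho th N HP). ring.
    - intros k _. unfold tri. rewrite (cint_rev g p (V rho th (S k))) by auto. ring. }
  rewrite Fan. apply csum_zero. intros k _.
  apply corner.
  - pose proof (nondeg rho th N p HP Hin k). lra.
  - intros z Hz. apply Hc. eapply hull_in_D; eauto.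
  - intros z Hz Hzp. apply Hh; auto. eapply hull_in_D; eauto.
Qed.

Definition Cdec (x y : C) : {x = y} + {x <> y}.
Proof.
  destruct x as [x1 x2], y as [y1 y2].
  destruct (Req_EM_T x1 y1) as [E1|E1]; destruct (Req_EM_T x2 y2) as [E2|E2].
  - left. subst. reflexivity.
  - right. intro E. inversion E. auto.
  - right. intro E. inversion E. auto.
  - right. intro E. inversion E. auto.
Defined.

Lemma nat_unb (r : R) : exists n : nat, r < INR n.
Proof.
  destruct (archimed r) as [H1 H2].
  destruct (Z_le_gt_dec (up r) 0) as [Hz|Hz].
  - exists 0%nat. simpl. apply IZR_le in Hz. lra.
  - exists (Z.to_nat (up r)). rewrite INR_IZR_INZ. rewrite Z2Nat.id by lia. lra.
Qed.

Definition EdgeCont f rho th N := forall k, (k < N)%nat -> Scont f (V rho th k) (V rho th (S k)).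

Lemma Pint_plus f g rho th N : EdgeCont f rho th N -> EdgeCont g rho th N ->
  Pint (fun z => f z + g z)%C rho th N = (Pint f rho th N + Pint g rho th N)%C.
Proof.
  intros Hf Hg. unfold Pint. induction N; simpl. ring.
  rewrite IHN by (intros k Hk; first [apply Hf | apply Hg]; lia).
  rewrite cint_plus by (first [apply Hf | apply Hg]; lia). ring.
Qed.

Lemma Pint_scal (c : C) f rho th N : EdgeCont f rho th N ->
  Pint (fun z => c * f z)%C rho th N = (c * Pint f rho th N)%C.
Proof.
  intros Hf. unfold Pint. induction N; simpl. ring.
  rewrite IHN by (intros k Hk; apply Hf; lia).
  rewrite cint_scal by (apply Hf; lia). ring.
Qed.

Lemma Pint_ext f g rho th N :
  (forall k t, (k < N)%nat -> 0 <= t <= 1 -> f (seg (V rho th k) (V rho th (S k)) t) = g (seg (V rho th k) (V rho th (S k)) t)) ->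
  Pint f rho th N = Pint g rho th N.
Proof.
  intros H. unfold Pint. apply csum_ext. intros k Hk. apply cint_ext. intros t Ht. apply H; auto.
Qed.

Lemma Pint_bound f rho th N M E : EdgeCont f rho th N ->
  (forall k t, (k < N)%nat -> 0 <= t <= 1 -> Cmod (f (seg (V rho th k) (V rho th (S k)) t)) <= M) ->
  (forall k, Cmod (V rho th (S k) - V rho th k)%C <= E) -> 0 <= E ->
  Cmod (Pint f rho th N) <= INR N * (M * E).
Proof.
  intros Hf HM HE HE0. unfold Pint. induction N.
  - simpl. rewrite Cmod_0. lra.
  - simpl csum. rewrite S_INR.
    eapply Rle_trans. apply Cmod_triangle.
    assert (A : Cmod (csum N (fun k => cint f (V rho th k) (V rho th (S k)))) <= INR N * (M * E)).
    { apply IHN. intros k Hk; apply Hf; lia. intros k t Hk Ht; apply HM; auto; lia. }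
    assert (HM0 : 0 <= M) by (eapply Rle_trans; [apply Cmod_ge_0| apply (HM 0%nat 0); [lia| lra]]).
    assert (B : Cmod (cint f (V rho th N) (V rho th (S N))) <= M * E).
    { eapply Rle_trans. apply cint_bound. apply Hf; lia. intros t Ht. apply HM; auto.
      apply Rmult_le_compat_l; auto. }
    lra.
Qed.

Lemma Im_inv_mult (w e : C) : w <> RtoC 0 ->
  Im (/ w * e)%C = Im (Cconj w * e)%C / (Cmod w * Cmod w).
Proof.
  intros Hw. rewrite Cmod_sq.
  assert (Hn : Re w * Re w + Im w * Im w <> 0).
  { intro E. apply Hw. destruct w as [w1 w2]. unfold Re, Im in E; simpl in E. apply Ceq; unfold Re, Im; simpl; nra. }
  destruct w as [w1 w2], e as [e1 e2]. unfold Cinv, Cconj, Re, Im in *; simpl in *. field. auto.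
Qed.

Lemma Im_csum_pos n (f : nat -> C) : (0 < n)%nat -> (forall k, (k < n)%nat -> 0 < Im (f k)) -> 0 < Im (csum n f).
Proof.
  induction n; intros Hn H. lia.
  cbn [csum]. rewrite Im_plus. destruct n.
  - cbn [csum]. specialize (H 0%nat ltac:(lia)). replace (Im (RtoC 0)) with 0 by reflexivity. lra.
  - assert (0 < Im (csum (S n) f)) by (apply IHn; [lia| intros; apply H; lia]).
    specialize (H (S n) ltac:(lia)). lra.
Qed.

Lemma seg_V_in_D rho th N k t : PolyOK rho th N -> 0 <= t <= 1 -> Cmod (seg (V rho th k) (V rho th (S k)) t) < 1.
Proof.
  intros HP Ht. destruct HP as [Hr _]. apply seg_in_D; auto; rewrite geo_mod; lra.
Qed.

Lemma W_pos rho th N (a : C) : PolyOK rho th N -> Inner rho th a ->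
  0 < Im (Pint (fun z => / (z - a))%C rho th N).
Proof.
  intros HP Ha.
  assert (Hr : 0 < rho < 1) by apply HP.
  assert (HN : (3 <= N)%nat) by apply HP.
  assert (Hap : Cmod a < 1).
  { unfold Inner, m2 in Ha. destruct (PolyOK_th _ _ _ HP) as [_ [H1 H2]]. apply sq_lt; [apply Cmod_ge_0| lra|]. nra. }
  unfold Pint. apply Im_csum_pos. lia.
  intros k Hk.
  set (e := (V rho th (S k) - V rho th k)%C).
  set (D := Im (Cconj (V rho th k - a) * e)%C).
  assert (HD : 0 < D) by (apply (inner_left rho th N a HP Ha)).
  assert (Ne : forall t, 0 <= t <= 1 -> (seg (V rho th k) (V rho th (S k)) t - a)%C <> RtoC 0).
  { intros t Ht E. pose proof (edge_far rho th k a t). fold e D in H. rewrite E, Cmod_0 in H. lra. }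
  assert (Sc : Scont (fun z => / (z - a))%C (V rho th k) (V rho th (S k))).
  { intros t Ht. apply holo_cont. apply holo_inv. apply holo_minus. apply holo_id. apply holo_const. apply Ne; auto. }
  rewrite Im_cint.
  apply Rlt_le_trans with (RInt (fun _ => D / 4) 0 1).
  { rewrite RInt_const. unfold scal; simpl; unfold mult; simpl. lra. }
  apply RInt_le. lra. apply ex_RInt_const. apply ex_Im; auto; lra.
  intros t Ht. unfold Ipath. fold e.
  set (w := (seg (V rho th k) (V rho th (S k)) t - a)%C).
  assert (Hw : w <> RtoC 0) by (apply Ne; lra).
  rewrite Im_inv_mult by auto.
  assert (ED : Im (Cconj w * e)%C = D) by (unfold w, D, e, seg, V, Cconj, Im, Re; simpl; ring).
  rewrite ED.
  assert (Hw2 : Cmod w <= 2).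
  { unfold w. eapply Rle_trans. apply Cmod_triangle. rewrite Cmod_opp.
    pose proof (seg_V_in_D rho th N k t HP ltac:(lra)). lra. }
  assert (Hw0 : 0 < Cmod w) by (apply Cmod_gt_0; auto).
  unfold Rdiv. apply Rmult_le_compat_l; [lra|]. apply Rinv_le_contravar; nra.
Qed.

Fixpoint gsum (n : nat) (u v : C) : C := match n with O => RtoC 0 | S m => (Cpow u m + v * gsum m u v)%C end.

Lemma gsum_id n (u v : C) : (Cpow u n - Cpow v n = (u - v) * gsum n u v)%C.
Proof. induction n; simpl. ring. replace (u * Cpow u n - v * Cpow v n)%C with (u * Cpow u n - v * Cpow u n + v * (Cpow u n - Cpow v n))%C by ring.
  rewrite IHn. ring. Qed.

Lemma holo_gsum n f g z : holo f z -> holo g z -> holo (fun w => gsum n (f w) (g w)) z.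
Proof.
  intros Hf Hg. induction n; simpl. apply holo_const.
  apply (holo_plus (fun w => Cpow (f w) n) (fun w => g w * gsum n (f w) (g w))%C).
  apply holo_pow; auto. apply (holo_mult g (fun w => gsum n (f w) (g w))); auto.
Qed.

Lemma Ccont_gsum n f g z : Ccont f z -> Ccont g z -> Ccont (fun w => gsum n (f w) (g w)) z.
Proof.
  intros Hf Hg. induction n; simpl. apply Ccont_const.
  apply (Ccont_plus (fun w => Cpow (f w) n) (fun w => g w * gsum n (f w) (g w))%C).
  apply Ccont_pow; auto. apply (Ccont_mult g (fun w => gsum n (f w) (g w))); auto.
Qed.

Lemma Ccont_ext_loc f g z : (exists d, 0 < d /\ forall w, Cmod (w - z)%C < d -> f w = g w) -> Ccont f z -> Ccont g z.
Proof.
  intros [d [Hd E]] H eps Heps. destruct (H eps Heps) as [d' [Hd' Hw]].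
  exists (Rmin d d'). split. apply Rmin_pos; auto.
  intros w Hwz. rewrite <- (E w), <- (E z).
  apply Hw. eapply Rlt_le_trans; [exact Hwz| apply Rmin_r].
  replace (z - z)%C with (RtoC 0) by ring. rewrite Cmod_0. auto.
  eapply Rlt_le_trans; [exact Hwz| apply Rmin_l].
Qed.

Lemma away (z p : C) : z <> p -> exists d, 0 < d /\ forall w, Cmod (w - z)%C < d -> w <> p.
Proof.
  intros H. exists (Cmod (z - p)%C). split. apply Cmod_gt_0. intro E. apply H.
  replace z with ((z - p) + p)%C by ring. rewrite E. ring.
  intros w Hw E. subst. replace (p - z)%C with (- (z - p))%C in Hw by ring. rewrite Cmod_opp in Hw. lra.
Qed.

Definition dq (G : C -> C) (a l : C) (z : C) : C := if Cdec z a then l else ((G z - G a) / (z - a))%C.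

Lemma dq_cont_a G a l : Cdiff G a l -> Ccont (dq G a l) a.
Proof.
  intros H eps Heps. destruct (H (eps / 2)) as [d [Hd Hw]]. lra.
  exists d. split; auto. intros w Hwa. unfold dq.
  destruct (Cdec a a) as [_|C]; [|contradiction].
  destruct (Cdec w a) as [->|Hne].
  - replace (l - l)%C with (RtoC 0) by ring. rewrite Cmod_0. auto.
  - specialize (Hw w Hwa).
    assert (Hn : (w - a)%C <> RtoC 0) by (intro E; apply Hne; replace w with ((w - a) + a)%C by ring; rewrite E; ring).
    replace ((G w - G a) / (w - a) - l)%C with ((G w - G a - (w - a) * l) / (w - a))%C by (field; auto).
    rewrite Cmod_div by auto.
    assert (Hp : 0 < Cmod (w - a)%C) by (apply Cmod_gt_0; auto).
    apply Rle_lt_trans with (eps / 2). apply Rmult_le_reg_r with (Cmod (w - a)%C); auto.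
    unfold Rdiv. rewrite Rmult_assoc, Rinv_l by lra. lra. lra.
Qed.

Lemma dq_holo G a l z : z <> a -> holo G z -> holo (dq G a l) z.
Proof.
  intros Hz HG. apply (holo_ext_loc (fun w => (G w - G a) / (w - a))%C).
  - destruct (away z a Hz) as [d [Hd Hw]]. exists d. split; auto. intros w Hwz. unfold dq.
    destruct (Cdec w a) as [E|_]; [exfalso; eapply Hw; eauto| auto].
  - apply holo_div. apply holo_minus; auto. apply holo_const. apply holo_minus. apply holo_id. apply holo_const.
    intro E. apply Hz. replace z with ((z - a) + a)%C by ring. rewrite E. ring.
Qed.

Lemma dq_cont G a l z : (z = a -> Cdiff G a l) -> (z <> a -> holo G z) -> Ccont (dq G a l) z.
Proof.
  intros H1 H2. destruct (Cdec z a) as [->|Hz]. apply dq_cont_a; auto.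
  apply holo_cont. apply dq_holo; auto.
Qed.

Lemma pow_bounded (x y K C0 : R) : 0 <= x -> 0 < y -> 0 < K ->
  (forall n, x ^ n * K <= C0 * y ^ n) -> x <= y.
Proof.
  intros Hx Hy HK H. destruct (Rle_dec x y) as [|Hxy]; auto. exfalso.
  set (r := x / y). assert (Hr : 1 < r) by (unfold r; apply Rmult_lt_reg_r with y; auto; unfold Rdiv; rewrite Rmult_assoc, Rinv_l; lra).
  assert (Bern : forall n, 1 + INR n * (r - 1) <= r ^ n).
  { induction n. simpl. lra. rewrite S_INR. simpl. pose proof (pos_INR n).
    assert (r * (1 + INR n * (r - 1)) <= r * r ^ n) by (apply Rmult_le_compat_l; lra).
    assert (0 <= INR n * ((r - 1) * (r - 1))) by (apply Rmult_le_pos; nra). nra. }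
  assert (Ex : forall n, x ^ n = r ^ n * y ^ n).
  { intros n. rewrite <- Rpow_mult_distr. unfold r. f_equal. field. lra. }
  destruct (nat_unb (C0 / K / (r - 1))) as [n Hn].
  specialize (H n). rewrite Ex in H.
  assert (Hyn : 0 < y ^ n) by (apply pow_lt; auto).
  assert (r ^ n * K <= C0) by (apply Rmult_le_reg_r with (y ^ n); auto; nra).
  specialize (Bern n).
  assert (INR n * (r - 1) * K < C0).
  { apply Rle_lt_trans with (r ^ n * K - K). nra. lra. }
  assert (C0 / K / (r - 1) * (r - 1) * K = C0) by (field; lra).
  assert (C0 / K / (r - 1) * (r - 1) * K < INR n * (r - 1) * K).
  { apply Rmult_lt_compat_r; auto. apply Rmult_lt_compat_r; lra. }
  lra.
Qed.

Lemma edge_len rho th N k : PolyOK rho th N ->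
  Cmod (V rho th (S k) - V rho th k)%C = sqrt (2 * (rho * rho) * (1 - cos th)).
Proof.
  intros HP. rewrite <- geo_edge with (k := k). rewrite sqrt_square; auto. apply Cmod_ge_0.
Qed.

Lemma edge_mod_ge rho th N k t : PolyOK rho th N ->
  sqrt (m2 rho th) <= Cmod (seg (V rho th k) (V rho th (S k)) t).
Proof.
  intros HP. destruct (PolyOK_th _ _ _ HP) as [Hs [Hc1 Hc2]]. assert (Hr : 0 < rho < 1) by apply HP.
  set (E := Cmod (V rho th (S k) - V rho th k)%C).
  pose proof (edge_far rho th k (RtoC 0) t) as H.
  replace (seg (V rho th k) (V rho th (S k)) t - RtoC 0)%C with (seg (V rho th k) (V rho th (S k)) t) in H by ring.
  replace (V rho th k - RtoC 0)%C with (V rho th k) in H by ring.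
  rewrite geo_im_e in H. fold E in H.
  assert (HE : E * E = 2 * (rho * rho) * (1 - cos th)) by apply geo_edge.
  set (Z := Cmod (seg (V rho th k) (V rho th (S k)) t)) in *.
  assert (HZ : 0 <= Z) by apply Cmod_ge_0. assert (HE0 : 0 <= E) by apply Cmod_ge_0.
  rewrite <- (sqrt_square Z HZ). apply sqrt_le_1_alt.
  unfold m2.
  pose proof (sin2_cos2 th) as S2. unfold Rsqr in S2.
  assert (HEp : 0 < E * E) by (rewrite HE; apply Rmult_lt_0_compat; nra).
  assert (Hq : 0 < rho * rho * sin th) by (apply Rmult_lt_0_compat; nra).
  assert (Z * Z * (E * E) >= rho * rho * sin th * (rho * rho * sin th)).
  { replace (Z * Z * (E * E)) with ((Z * E) * (Z * E)) by ring. apply Rle_ge. apply Rmult_le_compat; lra. }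
  apply Rmult_le_reg_r with (E * E); auto. rewrite HE in *.
  replace (rho * rho * (1 + cos th) / 2 * (2 * (rho * rho) * (1 - cos th))) with (rho * rho * (rho * rho) * (sin th * sin th)).
  nra. replace (sin th * sin th) with (1 - cos th * cos th) by lra. field.
Qed.

Lemma schwarz_poly (om : C -> C) rho th N (a : C) :
  (forall z, Cmod z < 1 -> holo om z) ->
  (forall z, Cmod z < 1 -> Cmod (om z) <= 1) ->
  om (RtoC 0) = RtoC 0 ->
  PolyOK rho th N -> Inner rho th a -> a <> RtoC 0 ->
  Cmod (om a) * sqrt (m2 rho th) <= Cmod a.
Proof.
  intros Hh Hb H0 HP Ha Ha0.
  assert (Hr : 0 < rho < 1) by apply HP.
  destruct (PolyOK_th _ _ _ HP) as [Hs [Hc1 Hc2]].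
  assert (Hm2 : 0 < m2 rho th) by (unfold m2; apply Rdiv_lt_0_compat; [apply Rmult_lt_0_compat; nra| lra]).
  assert (Hap : Cmod a < 1).
  { unfold Inner, m2 in Ha. apply sq_lt; [apply Cmod_ge_0| lra|]. unfold m2 in Hm2. nra. }
  assert (H00 : Cmod (RtoC 0) < 1) by (rewrite Cmod_0; lra).
  destruct (holo_Cdiff om (RtoC 0) (Hh _ H00)) as [l0 Hl0].
  set (h := dq om (RtoC 0) l0).
  assert (hz : forall z, om z = (h z * z)%C).
  { intros z. unfold h, dq. destruct (Cdec z (RtoC 0)) as [->|Hz].
    - rewrite H0. ring.
    - rewrite H0. field. intro E. apply Hz.
      first [exact E | (replace z with (z - RtoC 0)%C by ring; exact E) | (rewrite <- E; ring)]. }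
  assert (h_cont : forall z, Cmod z < 1 -> Ccont h z).
  { intros z Hz. apply dq_cont. intros ->; auto. intros _; auto. }
  assert (h_holo : forall z, Cmod z < 1 -> z <> RtoC 0 -> holo h z).
  { intros z Hz Hz0. apply dq_holo; auto. }
  assert (In0 : Inner rho th (RtoC 0)) by (unfold Inner; rewrite Cmod_0; lra).
  set (mm := sqrt (m2 rho th)).
  assert (Hmm : 0 < mm) by (apply sqrt_lt_R0; auto).
  set (E := sqrt (2 * (rho * rho) * (1 - cos th))).
  assert (HE : forall k, Cmod (V rho th (S k) - V rho th k)%C = E) by (intros k; apply (edge_len rho th N k HP)).
  assert (HE0 : 0 < E) by (apply sqrt_lt_R0; apply Rmult_lt_0_compat; nra).
  set (Dm := rho * rho * sin th - Cmod a * E).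
  assert (HDm : 0 < Dm) by (unfold Dm; rewrite <- (HE 0%nat); pose proof (inner_bound rho th N a HP Ha 0%nat); lra).
  set (d := Dm / E).
  assert (Hd : 0 < d) by (apply Rdiv_lt_0_compat; auto).
  assert (Far : forall k t, Cmod (seg (V rho th k) (V rho th (S k)) t - a)%C >= d).
  { intros k t. pose proof (edge_far rho th k a t) as H1. pose proof (geo_left rho th k a) as H2.
    rewrite HE in H1, H2. fold Dm in H2. unfold d.
    apply Rle_ge. apply Rmult_le_reg_r with E; auto. unfold Rdiv. rewrite Rmult_assoc, Rinv_l by lra. lra. }
  assert (Nea : forall k t, (seg (V rho th k) (V rho th (S k)) t - a)%C <> RtoC 0).
  { intros k t E0. specialize (Far k t). rewrite E0, Cmod_0 in Far. lra. }
  assert (Big : forall k t, mm <= Cmod (seg (V rho th k) (V rho th (S k)) t)) by (intros; apply (edge_mod_ge rho th N); auto).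
  assert (Ne0 : forall k t, seg (V rho th k) (V rho th (S k)) t <> RtoC 0).
  { intros k t E0. specialize (Big k t). rewrite E0, Cmod_0 in Big. lra. }
  assert (InD : forall k t, 0 <= t <= 1 -> Cmod (seg (V rho th k) (V rho th (S k)) t) < 1) by (intros; apply (seg_V_in_D rho th N); auto).
  set (W := Pint (fun z => / (z - a))%C rho th N).
  assert (HW : 0 < Cmod W).
  { pose proof (W_pos rho th N a HP Ha). fold W in H. pose proof (Im_le_Cmod W). pose proof (Rle_abs (Im W)). lra. }
  assert (inv_cont : EdgeCont (fun z => / (z - a))%C rho th N).
  { intros k Hk t Ht. apply holo_cont. apply holo_inv. apply holo_minus. apply holo_id. apply holo_const. apply Nea. }
  apply (pow_bounded _ _ (Cmod W) (INR N * E / d)); auto.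
  { apply Rmult_le_pos. apply Cmod_ge_0. lra. }
  { apply Cmod_gt_0. auto. }
  intros n.
  set (G := fun z => Cpow (om z) n).
  assert (Hap' : Cmod a < 1) by auto.
  destruct (holo_Cdiff G a (holo_pow om n a (Hh a Hap'))) as [la Hla].
  set (q := dq G a la).
  set (Sf := fun z => (h z * gsum n (om z) (a * h z))%C).
  set (Rf := fun z => (Cpow a n * (Cpow (h z) n * / (z - a)))%C).
  assert (q_cont : forall z, Cmod z < 1 -> Ccont q z).
  { intros z Hz. apply dq_cont. intros ->; auto. intros _. apply holo_pow. auto. }
  assert (S_cont : forall z, Cmod z < 1 -> Ccont Sf z).
  { intros z Hz. unfold Sf. apply (Ccont_mult h). auto.
    apply (Ccont_gsum n om (fun w => a * h w)%C). apply holo_cont; auto.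
    apply (Ccont_mult (fun _ => a) h). apply Ccont_const. auto. }
  assert (Pq : Pint q rho th N = RtoC 0).
  { apply (G_poly rho th N q a HP Ha q_cont). intros z Hz Hza. apply dq_holo; auto. apply holo_pow; auto. }
  assert (PS : Pint Sf rho th N = RtoC 0).
  { apply (G_poly rho th N Sf (RtoC 0) HP In0 S_cont). intros z Hz Hz0. unfold Sf.
    apply (holo_mult h). auto. apply (holo_gsum n om (fun w => a * h w)%C). auto.
    apply (holo_mult (fun _ => a) h). apply holo_const. auto. }
  assert (Eq_cont : EdgeCont q rho th N) by (intros k Hk t Ht; apply q_cont; auto).
  assert (ES_cont : EdgeCont Sf rho th N) by (intros k Hk t Ht; apply S_cont; auto).
  assert (ER_cont : EdgeCont Rf rho th N).
  { intros k Hk t Ht. unfold Rf. apply (Ccont_mult (fun _ => Cpow a n)). apply Ccont_const.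
    apply (Ccont_mult (fun w => Cpow (h w) n)). apply Ccont_pow. auto. apply inv_cont; auto. }
  assert (EG_cont : EdgeCont (fun z => G a * / (z - a))%C rho th N).
  { intros k Hk t Ht. apply (Ccont_mult (fun _ => G a)). apply Ccont_const. apply inv_cont; auto. }
  assert (Key : (G a * W)%C = Pint Rf rho th N).
  { assert (A : Pint (fun z => q z + G a * / (z - a))%C rho th N = Pint (fun z => Sf z + Rf z)%C rho th N).
    { apply Pint_ext. intros k t Hk Ht. set (z := seg (V rho th k) (V rho th (S k)) t).
      assert (Hza : (z - a)%C <> RtoC 0) by apply Nea.
      assert (Hza' : z <> a) by (intro E0; apply Hza; rewrite E0; ring).
      unfold q, dq. destruct (Cdec z a) as [E0|_]; [contradiction|].
      unfold Sf, Rf, G.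
      assert (K1 : Cpow (om z) n = ((z - a) * (h z * gsum n (om z) (a * h z)) + Cpow a n * Cpow (h z) n)%C).
      { assert (Ga := gsum_id n (om z) (a * h z)). rewrite Cpow_mult_l in Ga.
        assert (Hd' : (om z - a * h z)%C = (h z * (z - a))%C) by (rewrite (hz z); ring).
        rewrite Hd' in Ga.
        replace (Cpow (om z) n) with ((Cpow (om z) n - Cpow a n * Cpow (h z) n) + Cpow a n * Cpow (h z) n)%C by ring.
        rewrite Ga. ring. }
      rewrite K1. field. auto. }
    rewrite Pint_plus in A by auto. rewrite Pint_plus in A by auto.
    rewrite Pint_scal in A by auto. fold W in A. rewrite Pq, PS in A.
    replace (G a * W)%C with (RtoC 0 + G a * W)%C by ring. rewrite A. ring. }
  assert (Bd : Cmod (Pint Rf rho th N) <= INR N * ((Cmod a ^ n * (/ mm) ^ n * / d) * E)).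
  { apply Pint_bound; auto; [| intros; rewrite HE; lra| lra].
    intros k t Hk Ht. unfold Rf. set (z := seg (V rho th k) (V rho th (S k)) t).
    rewrite !Cmod_mult, !Cmod_pow, Cmod_inv by apply Nea.
    assert (Hhz : Cmod (h z) <= / mm).
    { assert (Hz0 : z <> RtoC 0) by apply Ne0.
      assert (Hzm : mm <= Cmod z) by apply Big.
      assert (Hzp : 0 < Cmod z) by lra.
      assert (E1 : Cmod (om z) = Cmod (h z) * Cmod z) by (rewrite (hz z) at 1; apply Cmod_mult).
      assert (E2 : Cmod (om z) <= 1) by (apply Hb; apply InD; auto).
      apply Rmult_le_reg_r with mm; auto. rewrite Rinv_l by lra.
      apply Rle_trans with (Cmod (h z) * Cmod z). apply Rmult_le_compat_l; auto. apply Cmod_ge_0. lra. }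
    assert (Hfar : d <= Cmod (z - a)%C) by (apply Rge_le; apply Far).
    assert (Hhn : Cmod (h z) ^ n <= (/ mm) ^ n) by (apply pow_incr; split; auto; apply Cmod_ge_0).
    assert (Hinv : / Cmod (z - a)%C <= / d) by (apply Rinv_le_contravar; auto).
    assert (0 <= Cmod a ^ n) by (apply pow_le; apply Cmod_ge_0).
    assert (0 <= Cmod (h z) ^ n) by (apply pow_le; apply Cmod_ge_0).
    assert (0 < / Cmod (z - a)%C) by (apply Rinv_0_lt_compat; lra).
    rewrite <- Rmult_assoc. apply Rmult_le_compat; auto.
    apply Rmult_le_pos; auto. lra.
    apply Rmult_le_compat_l; auto. }
  rewrite <- Key in Bd. rewrite Cmod_mult in Bd. unfold G in Bd. rewrite Cmod_pow in Bd.
  rewrite Rpow_mult_distr.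
  assert (Hmn : 0 < mm ^ n) by (apply pow_lt; auto).
  assert (Einv : (/ mm) ^ n * mm ^ n = 1) by (rewrite <- Rpow_mult_distr, Rinv_l, pow1; lra).
  apply Rle_trans with (mm ^ n * (Cmod (om a) ^ n * Cmod W)). right; ring.
  apply Rle_trans with (mm ^ n * (INR N * (Cmod a ^ n * (/ mm) ^ n * / d * E))).
  apply Rmult_le_compat_l; lra.
  right. unfold Rdiv. transitivity (INR N * E * / d * Cmod a ^ n * ((/ mm) ^ n * mm ^ n)). ring.
  rewrite Einv. ring.
Qed.

Lemma cos_lb2 x : - PI / 2 <= x -> x <= PI / 2 -> 1 - x * x / 2 <= cos x.
Proof.
  intros H1 H2. destruct (cos_bound x 0 H1 H2) as [H _]. unfold cos_approx in H. simpl in H.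
  unfold cos_term in H. simpl in H. lra.
Qed.

Lemma poly_exists (c : R) : 0 < c < 1 -> exists rho th N, PolyOK rho th N /\ c * c <= m2 rho th.
Proof.
  intros Hc.
  set (r2 := (1 + c * c) / 2).
  assert (Hr2 : c * c < r2 < 1) by (unfold r2; nra).
  set (rho := sqrt r2).
  assert (Hrho2 : rho * rho = r2) by (apply sqrt_sqrt; nra).
  assert (Hrho : 0 < rho < 1).
  { split. apply sqrt_lt_R0; nra. rewrite <- sqrt_1. apply sqrt_lt_1_alt; nra. }
  set (kap := 2 * (c * c) / r2 - 1).
  assert (Hk : kap < 1).
  { unfold kap. apply Rlt_le_trans with (2 * r2 / r2 - 1). 2: right; field; nra.
    apply Rplus_lt_compat_r. unfold Rdiv. apply Rmult_lt_compat_r. apply Rinv_0_lt_compat; nra. lra. }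
  destruct (nat_unb (2 * PI * PI / (1 - kap) + 4)) as [n0 Hn0].
  assert (HPI := PI_RGT_0).
  assert (Hpos : 0 < 2 * PI * PI / (1 - kap)) by (apply Rdiv_lt_0_compat; nra).
  assert (Hn4 : 4 < INR n0) by lra.
  set (th := 2 * PI / INR n0).
  exists rho, th, n0.
  assert (HN : (3 <= n0)%nat).
  { destruct (le_lt_dec 3 n0) as [|Hl]; auto. apply lt_INR in Hl. simpl in Hl. lra. }
  split. { unfold PolyOK. split; [auto| split; auto]. }
  assert (Hth0 : 0 < th) by (unfold th; apply Rdiv_lt_0_compat; lra).
  assert (Hth : th <= PI / 2).
  { unfold th. apply Rmult_le_reg_r with (INR n0). lra. unfold Rdiv. rewrite Rmult_assoc, Rinv_l by lra. nra. }
  pose proof (cos_lb2 th ltac:(lra) Hth) as Hcos.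
  assert (Hth2 : th * th <= 2 * (1 - kap)).
  { assert (E : th * th = 4 * PI * PI / (INR n0 * INR n0)) by (unfold th; field; lra).
    rewrite E. apply Rmult_le_reg_r with (INR n0 * INR n0). nra. unfold Rdiv. rewrite Rmult_assoc, Rinv_l by nra.
    assert (2 * PI * PI / (1 - kap) * (1 - kap) = 2 * PI * PI) by (field; lra).
    assert (2 * PI * PI < INR n0 * (1 - kap)).
    { apply Rle_lt_trans with (2 * PI * PI / (1 - kap) * (1 - kap)). lra. apply Rmult_lt_compat_r; lra. }
    nra. }
  assert (Hck : kap <= cos th) by lra.
  unfold m2. rewrite Hrho2.
  assert (kap * r2 = 2 * (c * c) - r2) by (unfold kap; field; nra).
  nra.
Qed.

Theorem schwarz (om : C -> C) :
  (forall z, Cmod z < 1 -> holo om z) ->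
  (forall z, Cmod z < 1 -> Cmod (om z) <= 1) ->
  om (RtoC 0) = RtoC 0 ->
  forall a, Cmod a < 1 -> Cmod (om a) <= Cmod a.
Proof.
  intros Hh Hb H0 a Ha.
  destruct (Cdec a (RtoC 0)) as [->|Ha0].
  { rewrite H0. lra. }
  assert (Hap : 0 < Cmod a) by (apply Cmod_gt_0; auto).
  assert (Claim : forall c, Cmod a < c < 1 -> Cmod (om a) * c <= Cmod a).
  { intros c Hc. destruct (poly_exists c ltac:(lra)) as [rho [th [N [HP Hm]]]].
    assert (Hin : Inner rho th a) by (unfold Inner; nra).
    pose proof (schwarz_poly om rho th N a Hh Hb H0 HP Hin Ha0) as Hs.
    assert (c <= sqrt (m2 rho th)).
    { rewrite <- (sqrt_square c) by lra. apply sqrt_le_1_alt. lra. }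
    pose proof (Cmod_ge_0 (om a)). nra. }
  destruct (Rle_dec (Cmod (om a)) (Cmod a)) as [|Hgt]; auto. exfalso.
  set (w := Cmod (om a)) in *.
  set (c := (Rmax (Cmod a) (Cmod a / w) + 1) / 2).
  assert (Hw : 0 < w) by lra.
  assert (Haw : Cmod a / w < 1) by (apply Rmult_lt_reg_r with w; auto; unfold Rdiv; rewrite Rmult_assoc, Rinv_l; lra).
  assert (HM1 : Rmax (Cmod a) (Cmod a / w) < 1) by (apply Rmax_lub_lt; lra).
  assert (HM2 : Cmod a <= Rmax (Cmod a) (Cmod a / w)) by apply Rmax_l.
  assert (HM3 : Cmod a / w <= Rmax (Cmod a) (Cmod a / w)) by apply Rmax_r.
  specialize (Claim c ltac:(unfold c; lra)).
  assert (Cmod a / w < c) by (unfold c; lra).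
  assert (Cmod a < w * c).
  { apply Rmult_lt_reg_r with (/ w). apply Rinv_0_lt_compat; auto.
    replace (w * c * / w) with c by (field; lra). exact H. }
  lra.
Qed.

Lemma Re_div (X Y : C) : Y <> RtoC 0 -> Re (X / Y)%C = Re (X * Cconj Y)%C / (Re Y * Re Y + Im Y * Im Y).
Proof.
  intros HY.
  assert (Hn : Re Y * Re Y + Im Y * Im Y <> 0).
  { intro E. apply HY. destruct Y as [y1 y2]. unfold Re, Im in E; simpl in E. apply Ceq; unfold Re, Im; simpl; nra. }
  destruct X as [x1 x2], Y as [y1 y2]. unfold Cdiv, Cinv, Cconj, Re, Im in *; simpl in *. field. auto.
Qed.

Lemma Cmod_lt_1_ne (om : C) : Cmod om < 1 -> (RtoC 1 - om)%C <> RtoC 0.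
Proof.
  intros H E. assert (om = RtoC 1) by (replace om with (RtoC 1 - (RtoC 1 - om))%C by ring; rewrite E; ring).
  subst. rewrite Cmod_1 in H. lra.
Qed.

Lemma key_ineq (x y p q s v r : R) :
  0 < x -> Rabs y <= v * x -> p * p + q * q <= s * s -> 0 <= s < r -> 0 < r ->
  v = (/ r - r) / 2 -> 0 < x * (1 - p * p - q * q) - 2 * y * q.
Proof.
  intros Hx Hy Hpq Hs Hr Hv.
  assert (Hq : Rabs q <= s).
  { unfold Rabs. destruct (Rcase_abs q); nra. }
  assert (Hyq : y * q <= Rabs y * Rabs q) by (rewrite <- Rabs_mult; apply Rle_abs).
  assert (Hv0 : 0 <= v) by (pose proof (Rabs_pos y); nra).
  assert (Hyq2 : Rabs y * Rabs q <= v * x * s) by (apply Rmult_le_compat; auto; apply Rabs_pos).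
  assert (Id : 1 - s * s - 2 * v * s = (r - s) * (s + / r)) by (rewrite Hv; field; lra).
  assert (Hpos : 0 < (r - s) * (s + / r)) by (apply Rmult_lt_0_compat; [lra| pose proof (Rinv_0_lt_compat r Hr); lra]).
  assert (x * (1 - s * s - 2 * v * s) > 0) by (rewrite Id; nra).
  nra.
Qed.

Lemma sq_lt_le (x y : R) : 0 <= x -> 0 <= y -> x * x <= y * y -> x <= y.
Proof. intros. nra. Qed.

Lemma atan_bound (t K v : R) : Rabs (atan t) <= K -> K = atan v -> Rabs t <= v.
Proof.
  intros H HK. subst K.
  destruct (Rle_dec (Rabs t) v) as [|Hn]; auto. exfalso.
  unfold Rabs in Hn, H. destruct (Rcase_abs t) as [Ht|Ht]; destruct (Rcase_abs (atan t)) as [Ha|Ha].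
  - assert (t < - v) by lra. apply atan_increasing in H0. rewrite atan_opp in H0. lra.
  - assert (t < - v) by lra. apply atan_increasing in H0. rewrite atan_opp in H0.
    pose proof (atan_increasing t 0 Ht). rewrite atan_0 in H1. lra.
  - assert (v < t) by lra. apply atan_increasing in H0.
    assert (0 <= atan t). { destruct (Req_dec t 0) as [->|Hz]. rewrite atan_0; lra. pose proof (atan_increasing 0 t ltac:(lra)). rewrite atan_0 in H1; lra. }
    lra.
  - assert (v < t) by lra. apply atan_increasing in H0. lra.
Qed.

Lemma asin_val (R : R) : 0 <= R < 1 -> asin (2 * R / (1 + R ^ 2)) = atan (2 * R / (1 - R ^ 2)).
Proof.
  intros HR.
  assert (H1 : 0 < 1 + R ^ 2) by nra. assert (H2 : 0 < 1 - R ^ 2) by nra.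
  rewrite asin_atan.
  - f_equal. unfold Rsqr.
    replace (1 - 2 * R / (1 + R ^ 2) * (2 * R / (1 + R ^ 2))) with (((1 - R ^ 2) / (1 + R ^ 2)) * ((1 - R ^ 2) / (1 + R ^ 2)))
      by (field; lra).
    rewrite sqrt_square. field. split; lra. apply Rdiv_le_0_compat; lra.
  - split. apply Rlt_le_trans with 0. lra. apply Rdiv_le_0_compat; lra.
    apply Rmult_lt_reg_r with (1 + R ^ 2); auto. unfold Rdiv. rewrite Rmult_assoc, Rinv_l by lra. nra.
Qed.

Theorem proposition3p5
  (F : C -> C) (K R : R) (phi : C -> C) :
  classP F ->
  is_lub (fun k => exists z, inD z /\ k = Rabs (Carg (F z))) K ->
  K < PI / 2 ->
  0 <= R < 1 ->
  K = asin (2 * R / (1 + R ^ 2)) ->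
  schwarz_type phi ->
  (forall z, inD z -> Cmod (phi z) <= (1 - R) / (1 + R)) ->
  forall f : C -> C, classP f -> classP (T_op F phi f).
Proof.
  intros [HFa [HFre HF0]] Hlub HK HR HKe [Hpa [Hpd Hp0]] Hpb f [Hfa [Hfre Hf0]].
  unfold inD in *.
  set (r := (1 - R) / (1 + R)) in *.
  assert (Hr : 0 < r <= 1).
  { unfold r. split. apply Rdiv_lt_0_compat; lra. apply Rmult_le_reg_r with (1 + R). lra.
    unfold Rdiv. rewrite Rmult_assoc, Rinv_l by lra. lra. }
  assert (Hphi : forall z, Cmod z < 1 -> Cmod (phi z) <= r * Cmod z).
  { intros z Hz.
    pose proof (schwarz (fun w => phi w * RtoC (/ r))%C) as S.
    assert (Hs : Cmod (phi z * RtoC (/ r))%C <= Cmod z).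
    { apply S; auto.
      - intros w Hw. apply (holo_mult phi (fun _ => RtoC (/ r))). apply Hpa; auto. apply holo_const.
      - intros w Hw. rewrite Cmod_mult, Cmod_R, Rabs_pos_eq by (left; apply Rinv_0_lt_compat; lra).
        apply Rmult_le_reg_r with r. lra. rewrite Rmult_assoc, Rinv_l by lra. rewrite Rmult_1_r, Rmult_1_l. apply Hpb; auto.
      - rewrite Hp0. ring. }
    rewrite Cmod_mult, Cmod_R, Rabs_pos_eq in Hs by (left; apply Rinv_0_lt_compat; lra).
    apply Rmult_le_reg_r with (/ r). apply Rinv_0_lt_compat; lra.
    replace (r * Cmod z * / r) with (Cmod z) by (field; lra). exact Hs. }
  set (om := fun w => ((f w - RtoC 1) / (f w + RtoC 1))%C).
  assert (Hne : forall w, Cmod w < 1 -> (f w + RtoC 1)%C <> RtoC 0).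
  { intros w Hw E. pose proof (Hfre w Hw) as H. destruct (f w) as [a b].
    apply (f_equal fst) in E. simpl in E. unfold Re in H; simpl in H. lra. }
  assert (Hom : forall w, Cmod w < 1 -> Cmod (om w) <= Cmod w).
  { apply schwarz.
    - intros w Hw. unfold om. apply holo_div.
      apply (holo_minus f (fun _ => RtoC 1)). apply Hfa; auto. apply holo_const.
      apply (holo_plus f (fun _ => RtoC 1)). apply Hfa; auto. apply holo_const. auto.
    - intros w Hw. unfold om. rewrite Cmod_div by auto.
      assert (Hp : 0 < Cmod (f w + RtoC 1)%C) by (apply Cmod_gt_0; auto).
      apply Rmult_le_reg_r with (Cmod (f w + RtoC 1)%C); auto.
      unfold Rdiv. rewrite Rmult_assoc, Rinv_l by lra. rewrite Rmult_1_r, Rmult_1_l.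
      apply sq_lt_le. apply Cmod_ge_0. apply Cmod_ge_0.
      rewrite !Cmod_sq. pose proof (Hfre w Hw). destruct (f w) as [a b]. unfold Re, Im in *; simpl in *. nra.
    - unfold om. rewrite Hf0. apply Ceq; unfold Re, Im; simpl; field. }
  split; [| split].
  - intros z Hz. unfold T_op. apply (holo_mult F (fun z => f (phi z))). apply HFa; auto.
    apply (holo_comp f phi). apply Hpa; auto. apply Hfa. apply Hpd; auto.
  - intros z Hz. unfold inD in Hz. unfold T_op.
    set (u := phi z).
    assert (Hu : Cmod u < r).
    { pose proof (Hphi z Hz) as H. fold u in H. assert (r * Cmod z < r * 1) by (apply Rmult_lt_compat_l; lra). lra. }
    assert (HuD : Cmod u < 1) by lra.
    set (w := f u). set (o := om u).
    assert (Ho : Cmod o < r) by (pose proof (Hom u HuD); fold o in H; lra).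
    assert (Ho1 : (RtoC 1 - o)%C <> RtoC 0) by (apply Cmod_lt_1_ne; lra).
    assert (Hw1 : (w + RtoC 1)%C <> RtoC 0) by (apply Hne; auto).
    assert (Ew : w = ((RtoC 1 + o) / (RtoC 1 - o))%C).
    { unfold o, om. fold w. field. split; auto.
      intro E. apply Ho1. unfold o, om. fold w.
      replace (RtoC 1 - (w - RtoC 1) / (w + RtoC 1))%C with ((w + RtoC 1 - (w - RtoC 1)) / (w + RtoC 1))%C by (field; auto).
      rewrite E. unfold Cdiv. ring. }
    fold w. rewrite Ew.
    replace (F z * ((RtoC 1 + o) / (RtoC 1 - o)))%C with ((F z * (RtoC 1 + o)) / (RtoC 1 - o))%C by (field; auto).
    rewrite Re_div by auto.
    apply Rdiv_lt_0_compat.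
    2: { assert (Hn : Re (RtoC 1 - o)%C * Re (RtoC 1 - o)%C + Im (RtoC 1 - o)%C * Im (RtoC 1 - o)%C <> 0).
         { intro E. apply Ho1. destruct (RtoC 1 - o)%C as [c1 c2]. unfold Re, Im in E; simpl in E. apply Ceq; unfold Re, Im; simpl; nra. }
         nra. }
    assert (HC : Rabs (Carg (F z)) <= K) by (apply Hlub; exists z; split; auto).
    assert (Hx : 0 < Re (F z)) by auto.
    assert (EC : Carg (F z) = atan (Im (F z) / Re (F z))).
    { unfold Carg. destruct (Rlt_dec 0 (fst (F z))) as [_|Hn]; [reflexivity| unfold Re in Hx; contradiction]. }
    rewrite EC in HC.
    set (v := (/ r - r) / 2).
    assert (Hv : v = 2 * R / (1 - R ^ 2)) by (unfold v, r; field; split; nra).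
    assert (HKv : K = atan v) by (rewrite HKe, Hv; apply asin_val; auto).
    pose proof (atan_bound _ _ _ HC HKv) as Hyx.
    assert (Hy : Rabs (Im (F z)) <= v * Re (F z)).
    { replace (Im (F z)) with (Im (F z) / Re (F z) * Re (F z)) by (field; lra).
      rewrite Rabs_mult, (Rabs_pos_eq (Re (F z))) by lra. apply Rmult_le_compat_r; lra. }
    assert (Hpq : Re o * Re o + Im o * Im o <= Cmod o * Cmod o) by (rewrite Cmod_sq; lra).
    pose proof (key_ineq (Re (F z)) (Im (F z)) (Re o) (Im o) (Cmod o) v r Hx Hy Hpq
      (conj (Cmod_ge_0 o) Ho) ltac:(lra) eq_refl) as Key.
    replace (Re (F z * (RtoC 1 + o) * Cconj (RtoC 1 - o))%C)
      with (Re (F z) * (1 - Re o * Re o - Im o * Im o) - 2 * Im (F z) * Im o); auto.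
    destruct (F z) as [x y], o as [p q]. unfold Cconj, Re, Im; simpl. ring.
  - unfold T_op. rewrite Hp0, HF0, Hf0. ring.
Qed.
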